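(* Let $\alpha_1,\mu_1\in\mathbb R$, $m\ge2$ an integer, and consider $$\partial_t u+u\,u_{xxx}+\alpha_1u_xu_{xx}+\frac{\mu_1}{m}(u^m)_x=0. \qquad(\ast)$$ Let $I=[a,b]$, $0<\alpha\le1$, and let $f\in L^\infty([0,\delta];\widetilde C^{3,\alpha}(I))$ be a solution of $(\ast)$ whose initial data $f_0$ is positive on $I\setminus\partial I$ and vanishes to order at least $3$ at each point of $\partial I$. Then: (1) for all $t\in[0,\delta]$, $f(t,\cdot)$ vanishes on $\partial I$ and $f(t,x)>0$ for $x\in I\setminus\partial I$; (2) the functions $t\mapsto\partial_x^kf(t,a)$, $k=0,1,2,3$, on $[0,\delta]$ are determined by the initial values $\partial_x^kf(0,a)$, $k=0,\dots,3$ (i.e. any two such solutions with the same values of $\partial_x^kf(0,a)$, $k\le3$, have the same $\partial_x^kf(t,a)$, $k\le 3$, for all $t\in[0,\delta]$). In particular, $$f(t,x)=(\beta(t)(x-a))^3+O\big(\|f\|_{L^\infty([0,\delta];C^{3,\alpha}(I))}|x-a|^{3+\alpha}\big)\quad\text{as }x\to a^+,$$ where the implicit constant in $O(\cdot)$ is universal and $\beta$ solves $\dot\beta(t)=-(2+6\alpha_1)\beta^4(t)$, $6\beta^3(0)=f_{0,xxx}(a)$. The analogous statements hold at the endpoint $b$.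
   Context: For a $C^{2,1}$ function $f$ on an interval $I$, $\|f\|_{Y(I)}=\|f^{-2/3}\partial_xf\|_{L^\infty(I)}^3+\|f^{-1/3}\partial_{xx}f\|_{L^\infty(I)}^{3/2}+\|f\|_{L^\infty(I)}+\|\partial_{xxx}f\|_{L^\infty(I)}$, and $\|f\|_{\widetilde C^{k,\alpha}(I)}=\|f\|_{C^{k,\alpha}(I)}+\|f\|_{Y(I)}$. For time-dependent $f$, $\|f\|_{L^\infty([0,\delta];\widetilde C^{k,\alpha}(I))}=\sup_{t\in[0,\delta]}\|f(t)\|_{\widetilde C^{k,\alpha}(I)}$, and $f$ belongs to this space if this is finite. *)

(* Defs.v *)
From Stdlib Require Import Reals.
From Coquelicot Require Import Coquelicot.
Open Scope R_scope.

Definition deriv_on (lo hi : R) (g g' : R -> R) : Prop :=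
  forall x, lo <= x <= hi ->
    filterlim (fun y => (g y - g x) / (y - x))
      (within (fun y => lo <= y <= hi /\ y <> x) (locally x))
      (locally (g' x)).

Definition x_derivs (a b : R) (F0 F1 F2 F3 : R -> R) : Prop :=
  deriv_on a b F0 F1 /\ deriv_on a b F1 F2 /\ deriv_on a b F2 F3.

(* ||F0||_{C^{3,alpha}([a,b])} <= M, where the norm is
   sup|F0| + sup|F0'| + sup|F0''| + sup|F0'''| + [F0''']_alpha. *)
Definition C3a_norm_le (a b alpha : R) (F0 F1 F2 F3 : R -> R) (M : R) : Prop :=
  exists M0 M1 M2 M3 H : R,
    (forall x, a <= x <= b -> Rabs (F0 x) <= M0) /\
    (forall x, a <= x <= b -> Rabs (F1 x) <= M1) /\
    (forall x, a <= x <= b -> Rabs (F2 x) <= M2) /\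
    (forall x, a <= x <= b -> Rabs (F3 x) <= M3) /\
    (forall x y, a <= x <= b -> a <= y <= b -> x <> y ->
       Rabs (F3 x - F3 y) <= H * Rpower (Rabs (x - y)) alpha) /\
    M0 + M1 + M2 + M3 + H <= M.

(* Each term of the Y([a,b]) norm is <= K:
   |F0|^{-2/3}|F0'| and |F0|^{-1/3}|F0''| (sup over the points where
   F0 <> 0, where these expressions are defined), |F0|, |F0'''|. *)
Definition Y_bounded (a b : R) (F0 F1 F2 F3 : R -> R) (K : R) : Prop :=
  forall x, a <= x <= b ->
    (F0 x <> 0 ->
       Rpower (Rabs (F0 x)) (-(2/3)) * Rabs (F1 x) <= K /\
       Rpower (Rabs (F0 x)) (-(1/3)) * Rabs (F2 x) <= K) /\
    Rabs (F0 x) <= K /\ Rabs (F3 x) <= K.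

Definition in_Linf_Ctilde3a (a b delta alpha : R)
    (f f1 f2 f3 : R -> R -> R) : Prop :=
  (forall t, 0 <= t <= delta -> x_derivs a b (f t) (f1 t) (f2 t) (f3 t)) /\
  (exists M, forall t, 0 <= t <= delta ->
       C3a_norm_le a b alpha (f t) (f1 t) (f2 t) (f3 t) M) /\
  (exists K, forall t, 0 <= t <= delta ->
       Y_bounded a b (f t) (f1 t) (f2 t) (f3 t) K).

(* f (with x-derivatives f1,f2,f3 and t-derivative ft) solves
   u_t + u u_xxx + alpha1 u_x u_xx + (mu1/m) (u^m)_x = 0
   on [0,delta] x [a,b];  (u^m)_x = m u^(m-1) u_x. *)
Definition is_solution (alpha1 mu1 : R) (m : nat) (a b delta : R)
    (f f1 f2 f3 ft : R -> R -> R) : Prop :=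
  forall x, a <= x <= b ->
    deriv_on 0 delta (fun t => f t x) (fun t => ft t x) /\
    forall t, 0 <= t <= delta ->
      ft t x + f t x * f3 t x + alpha1 * f1 t x * f2 t x
        + mu1 / INR m * (INR m * f t x ^ (m - 1) * f1 t x) = 0.

Definition Sol (alpha1 mu1 : R) (m : nat) (a b delta alpha : R)
    (f f1 f2 f3 ft : R -> R -> R) : Prop :=
  in_Linf_Ctilde3a a b delta alpha f f1 f2 f3 /\
  is_solution alpha1 mu1 m a b delta f f1 f2 f3 ft /\
  (forall x, a < x < b -> 0 < f 0 x) /\
  f 0 a = 0 /\ f1 0 a = 0 /\ f2 0 a = 0 /\
  f 0 b = 0 /\ f1 0 b = 0 /\ f2 0 b = 0.

(* Main.v *)
Require Import Defs.
From Stdlib Require Import Reals Lra Lia.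
From Coquelicot Require Import Coquelicot.
Open Scope R_scope.
Definition Dlim lo hi (g g' : R -> R) x := forall e, 0 < e -> exists d, 0 < d /\
  forall y, lo <= y <= hi -> Rabs (y - x) < d ->
   Rabs (g y - g x - g' x * (y - x)) <= e * Rabs (y - x).

Lemma deriv_Dlim lo hi g g' x : deriv_on lo hi g g' -> lo <= x <= hi -> Dlim lo hi g g' x.
Proof.
  intros H Hx e He.
  destruct (proj1 (filterlim_locally _ _) (H x Hx) (mkposreal e He)) as [d Hd].
  exists d. split; [apply cond_pos|]. intros y Hy Hyd.
  destruct (Req_dec y x) as [->|Hne].
  { replace (g x - g x - g' x * (x - x)) with 0 by ring. rewrite Rabs_R0.
    replace (x - x) with 0 by ring. rewrite Rabs_R0; lra. }
  specialize (Hd y Hyd (conj Hy Hne)). change (Rabs ((g y - g x)/(y-x) - g' x) < e) in Hd.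
  replace (g y - g x - g' x * (y - x)) with (((g y - g x)/(y-x) - g' x) * (y - x))
    by (field; lra).
  rewrite Rabs_mult. apply Rmult_le_compat_r; [apply Rabs_pos| lra].
Qed.

Lemma Dlim_deriv lo hi g g' : (forall x, lo <= x <= hi -> Dlim lo hi g g' x) -> deriv_on lo hi g g'.
Proof.
  intros H x Hx. apply filterlim_locally. intros eps.
  destruct (H x Hx (eps/2)) as [d [Hd Hd']]. { destruct eps; simpl; lra. }
  exists (mkposreal d Hd). intros y Hb [Hy Hne].
  change (Rabs ((g y - g x)/(y-x) - g' x) < eps).
  specialize (Hd' y Hy Hb).
  replace ((g y - g x)/(y-x) - g' x) with ((g y - g x - g' x * (y - x)) / (y - x))
    by (field; lra).
  assert (Hp : 0 < Rabs (y - x)) by (apply Rabs_pos_lt; lra).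
  unfold Rdiv. rewrite Rabs_mult, Rabs_inv.
  apply Rle_lt_trans with (eps/2 * Rabs (y-x) * / Rabs (y-x)).
  - apply Rmult_le_compat_r; [left; apply Rinv_0_lt_compat; auto | auto].
  - field_simplify; [destruct eps; simpl; lra | lra].
Qed.
Definition clamp lo hi t := Rmax lo (Rmin hi t).
Lemma clamp_in lo hi t : lo <= hi -> lo <= clamp lo hi t <= hi.
Proof. intros; unfold clamp, Rmax, Rmin; repeat destruct Rle_dec; lra. Qed.
Lemma clamp_id lo hi t : lo <= t <= hi -> clamp lo hi t = t.
Proof. intros; unfold clamp, Rmax, Rmin; repeat destruct Rle_dec; lra. Qed.
Lemma clamp_lip lo hi t u : lo <= hi -> Rabs (clamp lo hi t - clamp lo hi u) <= Rabs (t - u).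
Proof. intros; unfold clamp, Rmax, Rmin; repeat destruct Rle_dec; unfold Rabs;
  repeat destruct Rcase_abs; lra. Qed.

Lemma Dlim_is_derive lo hi g g' x : Dlim lo hi g g' x -> lo < x < hi -> is_derive g x (g' x).
Proof.
  intros H Hx. apply is_derive_Reals. intros eps Heps.
  destruct (H (eps/2)) as [d [Hd Hd']]; [lra|].
  assert (Hm : 0 < Rmin d (Rmin (x - lo) (hi - x))).
  { repeat apply Rmin_pos; lra. }
  exists (mkposreal _ Hm). simpl. intros h Hh0 Hh.
  assert (Hh1 : Rabs h < d) by (eapply Rlt_le_trans; [exact Hh| apply Rmin_l]).
  assert (Hh2 : Rabs h < x - lo) by (eapply Rlt_le_trans; [exact Hh| eapply Rle_trans; [apply Rmin_r| apply Rmin_l]]).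
  assert (Hh3 : Rabs h < hi - x) by (eapply Rlt_le_trans; [exact Hh| eapply Rle_trans; [apply Rmin_r| apply Rmin_r]]).
  assert (Hy : lo <= x + h <= hi) by (revert Hh2 Hh3; unfold Rabs; destruct Rcase_abs; lra).
  specialize (Hd' (x + h) Hy). replace (x + h - x) with h in Hd' by ring.
  specialize (Hd' Hh1).
  replace ((g (x + h) - g x) / h - g' x) with ((g (x + h) - g x - g' x * h) / h) by (field; auto).
  assert (Hp : 0 < Rabs h) by (apply Rabs_pos_lt; auto).
  unfold Rdiv. rewrite Rabs_mult, Rabs_inv.
  apply Rle_lt_trans with (eps/2 * Rabs h * / Rabs h).
  - apply Rmult_le_compat_r; [left; apply Rinv_0_lt_compat; auto | auto].
  - field_simplify; lra.
Qed.

Lemma Dlim_wcont lo hi g g' x : Dlim lo hi g g' x -> forall e, 0 < e -> exists d, 0 < d /\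
  forall y, lo <= y <= hi -> Rabs (y - x) < d -> Rabs (g y - g x) < e.
Proof.
  intros H e He. destruct (H 1) as [d [Hd Hd']]; [lra|].
  assert (Hp : 0 < e / (Rabs (g' x) + 1)).
  { apply Rdiv_lt_0_compat; [lra| pose proof (Rabs_pos (g' x)); lra]. }
  exists (Rmin d (e / (Rabs (g' x) + 1))). split; [apply Rmin_pos; lra|].
  intros y Hy Hyd.
  assert (H1 : Rabs (y - x) < d) by (eapply Rlt_le_trans; [exact Hyd| apply Rmin_l]).
  assert (H2 : Rabs (y - x) < e / (Rabs (g' x) + 1)) by (eapply Rlt_le_trans; [exact Hyd| apply Rmin_r]).
  specialize (Hd' y Hy H1).
  assert (H3 : Rabs (g y - g x) <= (Rabs (g' x) + 1) * Rabs (y - x)).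
  { replace (g y - g x) with ((g y - g x - g' x * (y - x)) + g' x * (y - x)) by ring.
    eapply Rle_trans; [apply Rabs_triang|]. rewrite Rabs_mult. lra. }
  eapply Rle_lt_trans; [exact H3|].
  pose proof (Rabs_pos (g' x)).
  apply Rmult_lt_compat_l with (r := Rabs (g' x) + 1) in H2; [|lra].
  replace ((Rabs (g' x) + 1) * (e / (Rabs (g' x) + 1))) with e in H2 by (field; lra). lra.
Qed.

Lemma Dlim_cont lo hi g g' : lo <= hi -> (forall x, lo <= x <= hi -> Dlim lo hi g g' x) ->
  forall t, continuity_pt (fun t => g (clamp lo hi t)) t.
Proof.
  intros Hlh H t eps Heps.
  destruct (Dlim_wcont lo hi g g' (clamp lo hi t) (H _ (clamp_in lo hi t Hlh)) eps Heps) as [d [Hd Hd']].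
  exists d. split; [lra|]. intros y [_ Hy]. simpl. unfold R_dist in *.
  apply Hd'; [apply clamp_in; auto|].
  eapply Rle_lt_trans; [apply clamp_lip; auto| exact Hy].
Qed.

Lemma mvt_clamp lo hi h dh : lo < hi -> (forall x, lo < x < hi -> is_derive h x (dh x)) ->
  (forall x, continuity_pt (fun t => h (clamp lo hi t)) x) ->
  exists xi, lo <= xi <= hi /\ h hi - h lo = dh xi * (hi - lo).
Proof.
  intros Hlh Hd Hc.
  destruct (MVT_gen (fun t => h (clamp lo hi t)) lo hi dh) as [xi [Hxi Heq]].
  - intros x Hx. rewrite Rmin_left, Rmax_right in Hx by lra.
    apply is_derive_ext_loc with h; [|apply Hd; auto].
    assert (Hm : 0 < Rmin (x - lo) (hi - x)) by (apply Rmin_pos; lra).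
    exists (mkposreal _ Hm). intros y Hy. change (Rabs (y - x) < Rmin (x - lo) (hi - x)) in Hy.
    assert (Rabs (y - x) < x - lo) by (eapply Rlt_le_trans; [exact Hy| apply Rmin_l]).
    assert (Rabs (y - x) < hi - x) by (eapply Rlt_le_trans; [exact Hy| apply Rmin_r]).
    rewrite clamp_id; auto. revert H H0; unfold Rabs; destruct Rcase_abs; lra.
  - intros; apply Hc.
  - rewrite Rmin_left, Rmax_right in Hxi by lra. exists xi. split; auto.
    rewrite !clamp_id in Heq by lra. auto.
Qed.

Lemma Dlim_minus lo hi g g' p p' x : Dlim lo hi g g' x -> Dlim lo hi p p' x ->
  Dlim lo hi (fun y => g y - p y) (fun y => g' y - p' y) x.
Proof.
  intros H1 H2 e He.
  destruct (H1 (e/2)) as [d1 [Hd1 H1']]; [lra|].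
  destruct (H2 (e/2)) as [d2 [Hd2 H2']]; [lra|].
  exists (Rmin d1 d2). split; [apply Rmin_pos; lra|]. intros y Hy Hyd.
  assert (Rabs (y - x) < d1) by (eapply Rlt_le_trans; [exact Hyd| apply Rmin_l]).
  assert (Rabs (y - x) < d2) by (eapply Rlt_le_trans; [exact Hyd| apply Rmin_r]).
  specialize (H1' y Hy H). specialize (H2' y Hy H0).
  replace (g y - p y - (g x - p x) - (g' x - p' x) * (y - x)) with
    ((g y - g x - g' x * (y - x)) - (p y - p x - p' x * (y - x))) by ring.
  eapply Rle_trans; [apply Rabs_triang|]. rewrite Rabs_Ropp. lra.
Qed.

Lemma is_derive_Dlim lo hi p p' x : is_derive p x (p' x) -> Dlim lo hi p p' x.
Proof.
  intros H. apply is_derive_Reals in H. intros e He.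
  destruct (H e He) as [d Hd]. exists d. split; [apply cond_pos|].
  intros y _ Hy. destruct (Req_dec y x) as [->|Hne].
  { replace (p x - p x - p' x * (x - x)) with 0 by ring. rewrite Rabs_R0.
    apply Rmult_le_pos; [lra| apply Rabs_pos]. }
  specialize (Hd (y - x) ltac:(lra) Hy). replace (x + (y - x)) with y in Hd by ring.
  replace (p y - p x - p' x * (y - x)) with (((p y - p x) / (y - x) - p' x) * (y - x)) by (field; lra).
  rewrite Rabs_mult. apply Rmult_le_compat_r; [apply Rabs_pos|lra].
Qed.

Lemma Dlim_sub lo hi u v g g' x : Dlim lo hi g g' x -> lo <= u -> v <= hi -> Dlim u v g g' x.
Proof.
  intros H Hu Hv e He. destruct (H e He) as [d [Hd Hd']]. exists d. split; auto.
  intros y Hy. apply Hd'. lra.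
Qed.

Lemma mvi lo hi h dh E : lo <= hi -> (forall x, lo <= x <= hi -> Dlim lo hi h dh x) ->
  (forall x, lo <= x <= hi -> Rabs (dh x) <= E) -> Rabs (h hi - h lo) <= E * (hi - lo).
Proof.
  intros Hlh HD HE. destruct (Req_dec lo hi) as [->|Hne].
  { replace (h hi - h hi) with 0 by ring. rewrite Rabs_R0. 
    replace (hi - hi) with 0 by ring. lra. }
  destruct (mvt_clamp lo hi h dh) as [xi [Hxi Heq]].
  - lra.
  - intros x Hx. apply Dlim_is_derive with lo hi; auto. apply HD; lra.
  - apply Dlim_cont with dh; auto.
  - rewrite Heq, Rabs_mult, (Rabs_right (hi - lo)) by lra.
    apply Rmult_le_compat_r; [lra|]. auto.
Qed.

Lemma mvi2 lo hi g g' p p' u v E : deriv_on lo hi g g' -> (forall x, is_derive p x (p' x)) ->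
  lo <= u -> u <= v -> v <= hi -> (forall y, u <= y <= v -> Rabs (g' y - p' y) <= E) ->
  Rabs (g v - p v - (g u - p u)) <= E * (v - u).
Proof.
  intros Hg Hp H1 H2 H3 HE.
  apply (mvi u v (fun y => g y - p y) (fun y => g' y - p' y)); auto.
  intros x Hx. apply Dlim_minus.
  - apply Dlim_sub with lo hi; auto. apply deriv_Dlim; auto. lra.
  - apply is_derive_Dlim; auto.
Qed.

Lemma clamp_cont lo hi x : lo <= hi -> continuity_pt (clamp lo hi) x.
Proof.
  intros Hlh eps Heps. exists eps. split; auto. intros y [_ Hy]. simpl. unfold R_dist in *.
  eapply Rle_lt_trans; [apply clamp_lip; auto| exact Hy].
Qed.

Lemma h_mvt lo hi g g' L s u v : deriv_on lo hi g g' -> lo <= u -> u < v -> v <= hi ->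
  exists xi, u <= xi <= v /\
   g v ^ 2 * exp (s * L * v) - g u ^ 2 * exp (s * L * u) =
   (2 * g xi * g' xi + s * L * g xi ^ 2) * exp (s * L * xi) * (v - u).
Proof.
  intros Hg H1 H2 H3.
  destruct (mvt_clamp u v (fun t => g t ^ 2 * exp (s * L * t))
     (fun t => (2 * g t * g' t + s * L * g t ^ 2) * exp (s * L * t))) as [xi [Hxi Heq]].
  - auto.
  - intros x Hx. assert (Hd : is_derive g x (g' x)).
    { apply Dlim_is_derive with lo hi; [apply deriv_Dlim; auto; lra| lra]. }
    evar (l : R).
    assert (Hl : is_derive (fun t => g t ^ 2 * exp (s * L * t)) x l).
    { apply Derive.is_derive_mult.
      - apply is_derive_pow; exact Hd.
      - apply (is_derive_comp exp (fun t => s * L * t)).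
        + apply is_derive_exp.
        + assert (H0 : is_derive (fun t => s * L * t) x (s * L)) by (auto_derive; auto; ring).
          exact H0. }
    subst l. match type of Hl with is_derive _ _ ?l => replace ((2 * g x * g' x + s * L * g x ^ 2) * exp (s * L * x)) with l; [exact Hl|] end.
    simpl. unfold scal; simpl; unfold mult; simpl. ring.
  - intros x.
    assert (Hc1 : continuity_pt (fun t => g (clamp u v t)) x).
    { apply Dlim_cont with g'; [lra|]. intros y Hy.
      apply Dlim_sub with lo hi; try lra. apply deriv_Dlim; auto; lra. }
    assert (Hc2 : continuity_pt (fun t => exp (s * L * clamp u v t)) x).
    { apply (continuity_pt_comp (fun t => s * L * clamp u v t) exp).
      - apply (continuity_pt_scal (clamp u v) (s * L)). apply clamp_cont; lra.
      - apply derivable_continuous_pt, derivable_pt_exp. }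
    apply (continuity_pt_mult (fun t => g (clamp u v t) ^ 2) (fun t => exp (s * L * clamp u v t))); auto.
    apply (continuity_pt_comp (fun t => g (clamp u v t)) (fun z => z ^ 2)); auto.
    apply derivable_continuous_pt, derivable_pt_pow.
  - exists xi. split; auto.
Qed.

Lemma key_ineq L G G' : (G <> 0 -> Rabs G' <= L * Rabs G) -> - (L * G ^ 2) <= G * G' <= L * G ^ 2.
Proof.
  intros H. destruct (Req_dec G 0) as [->|Hne]. { simpl; lra. }
  specialize (H Hne).
  assert (Rabs (G * G') <= L * G ^ 2).
  { rewrite Rabs_mult. replace (L * G ^ 2) with (Rabs G * (L * Rabs G)).
    - apply Rmult_le_compat_l; [apply Rabs_pos| auto].
    - replace (G ^ 2) with (Rabs G * Rabs G). ring.
      rewrite <- Rabs_mult. simpl. rewrite Rmult_1_r. apply Rabs_right.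
      apply Rle_ge, Rle_0_sqr. }
  revert H0. unfold Rabs; destruct Rcase_abs; lra.
Qed.

Lemma gronwall lo hi g g' L : deriv_on lo hi g g' -> 0 <= L ->
  (forall t, lo <= t <= hi -> g t <> 0 -> Rabs (g' t) <= L * Rabs (g t)) ->
  forall t0, lo <= t0 <= hi -> g t0 = 0 -> forall t, lo <= t <= hi -> g t = 0.
Proof.
  intros Hg HL HB t0 Ht0 Hz t Ht.
  assert (Hsq : g t ^ 2 * exp (0) <= 0 \/ exists s, g t ^ 2 * exp s <= 0).
  { right. destruct (Rtotal_order t0 t) as [Hlt|[Heq|Hgt]].
    - destruct (h_mvt lo hi g g' L (-2) t0 t Hg) as [xi [Hxi Heq]]; try lra.
      exists (-2 * L * t). rewrite Hz in Heq.
      assert (K := key_ineq L (g xi) (g' xi) (HB xi ltac:(lra))).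
      pose proof (exp_pos (-2 * L * xi)).
      assert ((2 * g xi * g' xi + -2 * L * g xi ^ 2) * exp (-2 * L * xi) * (t - t0) <= 0).
      { apply Rmult_le_0_r; [|lra]. apply Rmult_le_0_r; lra. }
      simpl in Heq. lra.
    - subst; exists 0; rewrite Hz; simpl; lra.
    - destruct (h_mvt lo hi g g' L 2 t t0 Hg) as [xi [Hxi Heq]]; try lra.
      exists (2 * L * t). rewrite Hz in Heq.
      assert (K := key_ineq L (g xi) (g' xi) (HB xi ltac:(lra))).
      pose proof (exp_pos (2 * L * xi)).
      assert (0 <= (2 * g xi * g' xi + 2 * L * g xi ^ 2) * exp (2 * L * xi) * (t0 - t)).
      { apply Rmult_le_pos; [|lra]. apply Rmult_le_pos; lra. }
      simpl in Heq. lra. }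
  destruct Hsq as [H|[s H]].
  - pose proof (exp_pos 0). assert (g t ^ 2 <= 0) by nra. nra.
  - pose proof (exp_pos s). assert (g t ^ 2 <= 0) by nra. nra.
Qed.

Lemma pmono k al y s : 0 < al -> 0 < y <= s -> y ^ k * Rpower y al <= s ^ k * Rpower s al.
Proof.
  intros Hal Hy. apply Rmult_le_compat.
  - apply pow_le; lra.
  - left; apply exp_pos.
  - apply pow_incr; lra.
  - apply Rle_Rpower_l; lra.
Qed.

Section Taylor.
Variables (a b al H : R) (F0 F1 F2 F3 : R -> R).
Hypotheses (Hab : a < b) (Hal : 0 < al) (HH : 0 <= H)
  (D0 : deriv_on a b F0 F1) (D1 : deriv_on a b F1 F2) (D2 : deriv_on a b F2 F3)
  (Z0 : F0 a = 0) (Z1 : F1 a = 0) (Z2 : F2 a = 0)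
  (Hol : forall x y, a <= x <= b -> a <= y <= b -> x <> y -> Rabs (F3 x - F3 y) <= H * Rpower (Rabs (x - y)) al).

Lemma tay3 s : 0 < s <= b - a -> Rabs (F3 (a + s) - F3 a) <= H * Rpower s al.
Proof.
  intros Hs. replace s with (Rabs (a + s - a)) at 2 by (rewrite Rabs_right; lra).
  apply Hol; lra.
Qed.

Lemma tay2 s : 0 < s <= b - a -> Rabs (F2 (a + s) - F3 a * s) <= H * s * Rpower s al.
Proof.
  intros Hs.
  assert (K := mvi2 a b F2 F3 (fun y => F3 a * (y - a)) (fun _ => F3 a) a (a + s) (H * Rpower s al) D2).
  replace (F2 (a + s) - F3 a * s) with (F2 (a + s) - F3 a * (a + s - a) - (F2 a - F3 a * (a - a))) by (rewrite Z2; ring).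
  replace (H * s * Rpower s al) with (H * Rpower s al * (a + s - a)) by ring.
  apply K; try lra.
  - intros x. auto_derive; auto; field.
  - intros y Hy. destruct (Req_dec y a) as [->|Hne].
    + replace (F3 a - F3 a) with 0 by ring. rewrite Rabs_R0. apply Rmult_le_pos; auto. left; apply exp_pos.
    + replace y with (a + (y - a)) by ring. eapply Rle_trans; [apply tay3; lra|].
      apply Rmult_le_compat_l; auto. apply Rle_Rpower_l; lra.
Qed.

Lemma tay1 s : 0 < s <= b - a -> Rabs (F1 (a + s) - F3 a / 2 * s ^ 2) <= H * s ^ 2 * Rpower s al.
Proof.
  intros Hs.
  assert (K := mvi2 a b F1 F2 (fun y => F3 a / 2 * (y - a) ^ 2) (fun y => F3 a * (y - a)) a (a + s) (H * s * Rpower s al) D1).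
  replace (F1 (a + s) - F3 a / 2 * s ^ 2) with (F1 (a + s) - F3 a / 2 * (a + s - a) ^ 2 - (F1 a - F3 a / 2 * (a - a) ^ 2)) by (rewrite Z1; ring).
  replace (H * s ^ 2 * Rpower s al) with (H * s * Rpower s al * (a + s - a)) by ring.
  apply K; try lra.
  - intros x. auto_derive; auto; field.
  - intros y Hy. destruct (Req_dec y a) as [->|Hne].
    + replace (F2 a - F3 a * (a - a)) with 0 by (rewrite Z2; ring). rewrite Rabs_R0.
      apply Rmult_le_pos; [nra| left; apply exp_pos].
    + replace (F2 y) with (F2 (a + (y - a))) by (f_equal; ring). eapply Rle_trans; [apply tay2; lra|].
      try replace (a + (y - a) - a) with (y - a) by ring.
      rewrite !Rmult_assoc. apply Rmult_le_compat_l; auto.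
      pose proof (pmono 1 al (y - a) s Hal ltac:(lra)). simpl in H0. lra.
Qed.

Lemma tay0 s : 0 < s <= b - a -> Rabs (F0 (a + s) - F3 a / 6 * s ^ 3) <= H * s ^ 3 * Rpower s al.
Proof.
  intros Hs.
  assert (K := mvi2 a b F0 F1 (fun y => F3 a / 6 * (y - a) ^ 3) (fun y => F3 a / 2 * (y - a) ^ 2) a (a + s) (H * s ^ 2 * Rpower s al) D0).
  replace (F0 (a + s) - F3 a / 6 * s ^ 3) with (F0 (a + s) - F3 a / 6 * (a + s - a) ^ 3 - (F0 a - F3 a / 6 * (a - a) ^ 3)) by (rewrite Z0; ring).
  replace (H * s ^ 3 * Rpower s al) with (H * s ^ 2 * Rpower s al * (a + s - a)) by ring.
  apply K; try lra.
  - intros x. auto_derive; auto; field.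
  - intros y Hy. destruct (Req_dec y a) as [->|Hne].
    + replace (F1 a - F3 a / 2 * (a - a) ^ 2) with 0 by (rewrite Z1; ring). rewrite Rabs_R0.
      apply Rmult_le_pos; [apply Rmult_le_pos; [auto| apply pow_le; lra]| left; apply exp_pos].
    + replace (F1 y) with (F1 (a + (y - a))) by (f_equal; ring). eapply Rle_trans; [apply tay1; lra|].
      try replace (a + (y - a) - a) with (y - a) by ring.
      rewrite !Rmult_assoc. apply Rmult_le_compat_l; auto.
      apply pmono; lra.
Qed.
End Taylor.

Lemma rp_small q K z Q D : 0 < q -> 0 < z -> 0 < D -> 0 < K ->
  Rpower z (- q) * Rabs Q <= K -> D <= Rabs Q -> Rpower (D / K) (/ q) <= z.
Proof.
  intros Hq Hz HD HK H1 H2. rewrite Rpower_Ropp in H1.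
  assert (HP : 0 < Rpower z q) by apply exp_pos.
  assert (H3 : Rabs Q <= K * Rpower z q).
  { apply Rmult_le_compat_l with (r := Rpower z q) in H1; [|lra].
    rewrite <- Rmult_assoc, Rinv_r in H1 by lra. lra. }
  assert (H4 : D / K <= Rpower z q).
  { apply Rmult_le_reg_r with K; auto. unfold Rdiv. rewrite Rmult_assoc, Rinv_l by lra. lra. }
  replace z with (Rpower (Rpower z q) (/ q)) at 1.
  - apply Rle_Rpower_l; [left; apply Rinv_0_lt_compat; auto|]. split; auto.
    apply Rdiv_lt_0_compat; auto.
  - rewrite Rpower_mult, Rinv_r, Rpower_1; lra.
Qed.

Lemma near_a a b F F' (e : R) : a < b -> deriv_on a b F F' -> 0 < e -> exists r, 0 < r /\ r <= b - a /\
  forall y, a <= y <= a + r -> Rabs (F y - F a) < e.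
Proof.
  intros Hab HD He. destruct (Dlim_wcont a b F F' a (deriv_Dlim a b F F' a HD ltac:(lra)) e He) as [d [Hd Hd']].
  exists (Rmin (d/2) (b - a)). split; [apply Rmin_pos; lra|]. split; [apply Rmin_r|].
  intros y Hy. assert (Rmin (d/2) (b-a) <= d/2) by apply Rmin_l.
  assert (Rmin (d/2) (b-a) <= b - a) by apply Rmin_r.
  apply Hd'; [lra|]. rewrite Rabs_right; lra.
Qed.

Section Vanish.
Variables (a b K : R) (F0 F1 F2 F3 : R -> R).
Hypotheses (Hab : a < b)
  (D0 : deriv_on a b F0 F1) (D1 : deriv_on a b F1 F2) (D2 : deriv_on a b F2 F3)
  (Z0 : F0 a = 0)
  (HY : forall x, a <= x <= b -> F0 x <> 0 ->
       Rpower (Rabs (F0 x)) (-(2/3)) * Rabs (F1 x) <= K /\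
       Rpower (Rabs (F0 x)) (-(1/3)) * Rabs (F2 x) <= K).

Lemma van1 : F1 a = 0.
Proof.
  destruct (Req_dec (F1 a) 0) as [|Hd]; auto. exfalso.
  set (d := F1 a) in *. assert (Hdp : 0 < Rabs d) by (apply Rabs_pos_lt; auto).
  set (K' := Rmax K 1). assert (HK' : 0 < K') by (unfold K'; pose proof (Rmax_r K 1); lra).
  assert (HKK : K <= K') by apply Rmax_l.
  set (z0 := Rpower ((Rabs d / 2) / K') (/ (2/3))).
  assert (Hz0 : 0 < z0) by apply exp_pos.
  destruct (near_a a b F1 F2 (Rabs d / 2) Hab D1 ltac:(lra)) as [r1 [Hr1 [Hr1b H1]]].
  destruct (near_a a b F0 F1 z0 Hab D0 Hz0) as [r2 [Hr2 [Hr2b H2]]].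
  set (y := a + Rmin r1 r2 / 2).
  assert (Hm : 0 < Rmin r1 r2) by (apply Rmin_pos; lra).
  assert (Rmin r1 r2 <= r1) by apply Rmin_l. assert (Rmin r1 r2 <= r2) by apply Rmin_r.
  assert (Hy : a < y <= a + r1 /\ y <= a + r2) by (unfold y; lra).
  assert (HM := mvi2 a b F0 F1 (fun x => d * (x - a)) (fun _ => d) a y (Rabs d / 2) D0).
  assert (HM' : Rabs (F0 y - d * (y - a) - (F0 a - d * (a - a))) <= Rabs d / 2 * (y - a)).
  { apply HM; try lra.
    - intros x; auto_derive; auto; ring.
    - intros x Hx. left. apply H1. lra. }
  rewrite Z0 in HM'. replace (d * (a - a)) with 0 in HM' by ring.
  assert (HF0 : Rabs d / 2 * (y - a) <= Rabs (F0 y)).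
  { assert (Rabs (d * (y - a)) = Rabs d * (y - a)) by (rewrite Rabs_mult, (Rabs_right (y - a)); lra).
    pose proof (Rabs_triang_inv (d * (y - a)) (F0 y)).
    replace (F0 y - d * (y - a) - (0 - 0)) with (- (d * (y - a) - F0 y)) in HM' by ring.
    rewrite Rabs_Ropp in HM'. lra. }
  assert (Hnz : F0 y <> 0).
  { intro E. rewrite E, Rabs_R0 in HF0. assert (0 < Rabs d / 2 * (y - a)) by (apply Rmult_lt_0_compat; lra). lra. }
  destruct (HY y ltac:(lra) Hnz) as [HY1 _].
  assert (HQ : Rabs d / 2 <= Rabs (F1 y)).
  { specialize (H1 y ltac:(lra)). pose proof (Rabs_triang_inv d (F1 y)).
    rewrite <- Rabs_Ropp in H1. replace (- (F1 y - F1 a)) with (d - F1 y) in H1 by (unfold d; ring). lra. }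
  assert (Hz : z0 <= Rabs (F0 y)).
  { apply rp_small with (K := K') (Q := F1 y); try lra.
    apply Rabs_pos_lt; auto. }
  specialize (H2 y ltac:(lra)). rewrite Z0, Rminus_0_r in H2. lra.
Qed.

Lemma van2 : F2 a = 0.
Proof.
  pose proof van1 as Z1.
  destruct (Req_dec (F2 a) 0) as [|Hd]; auto. exfalso.
  set (d := F2 a) in *. assert (Hdp : 0 < Rabs d) by (apply Rabs_pos_lt; auto).
  set (K' := Rmax K 1). assert (HK' : 0 < K') by (unfold K'; pose proof (Rmax_r K 1); lra).
  assert (HKK : K <= K') by apply Rmax_l.
  set (z0 := Rpower ((Rabs d / 2) / K') (/ (1/3))).
  assert (Hz0 : 0 < z0) by apply exp_pos.
  destruct (near_a a b F2 F3 (Rabs d / 4) Hab D2 ltac:(lra)) as [r1 [Hr1 [Hr1b H1]]].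
  destruct (near_a a b F0 F1 z0 Hab D0 Hz0) as [r2 [Hr2 [Hr2b H2]]].
  set (y := a + Rmin r1 r2 / 2).
  assert (Hm : 0 < Rmin r1 r2) by (apply Rmin_pos; lra).
  assert (Rmin r1 r2 <= r1) by apply Rmin_l. assert (Rmin r1 r2 <= r2) by apply Rmin_r.
  assert (Hy : a < y <= a + r1 /\ y <= a + r2) by (unfold y; lra).
  assert (HB1 : forall x, a <= x <= y -> Rabs (F1 x - d * (x - a)) <= Rabs d / 4 * (x - a)).
  { intros x Hx.
    assert (HM := mvi2 a b F1 F2 (fun x => d * (x - a)) (fun _ => d) a x (Rabs d / 4) D1).
    replace (F1 x - d * (x - a)) with (F1 x - d * (x - a) - (F1 a - d * (a - a))) by (rewrite Z1; ring).
    apply HM; try lra.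
    - intros u; auto_derive; auto; ring.
    - intros u Hu. left. apply H1. lra. }
  assert (HM := mvi2 a b F0 F1 (fun x => d / 2 * (x - a) ^ 2) (fun x => d * (x - a)) a y (Rabs d / 4 * (y - a)) D0).
  assert (HM' : Rabs (F0 y - d / 2 * (y - a) ^ 2 - (F0 a - d / 2 * (a - a) ^ 2)) <= Rabs d / 4 * (y - a) * (y - a)).
  { apply HM; try lra.
    - intros x; auto_derive; auto; field.
    - intros x Hx. eapply Rle_trans; [apply HB1; lra|]. apply Rmult_le_compat_l; lra. }
  rewrite Z0 in HM'. replace (d / 2 * (a - a) ^ 2) with 0 in HM' by ring.
  assert (HF0 : Rabs d / 4 * (y - a) ^ 2 <= Rabs (F0 y)).
  { assert (Rabs (d / 2 * (y - a) ^ 2) = Rabs d / 2 * (y - a) ^ 2).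
    { unfold Rdiv. rewrite !Rabs_mult, Rabs_inv, (Rabs_right 2), (Rabs_right ((y - a)^2)); try lra.
      apply Rle_ge, pow_le; lra. }
    pose proof (Rabs_triang_inv (d / 2 * (y - a) ^ 2) (F0 y)).
    replace (F0 y - d / 2 * (y - a) ^ 2 - (0 - 0)) with (- (d / 2 * (y - a) ^ 2 - F0 y)) in HM' by ring.
    rewrite Rabs_Ropp in HM'. simpl in *. lra. }
  assert (Hnz : F0 y <> 0).
  { intro E. rewrite E, Rabs_R0 in HF0. assert (0 < Rabs d / 4 * (y - a) ^ 2).
    { apply Rmult_lt_0_compat; [lra| apply pow_lt; lra]. } lra. }
  destruct (HY y ltac:(lra) Hnz) as [_ HY2].
  assert (HQ : Rabs d / 2 <= Rabs (F2 y)).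
  { specialize (H1 y ltac:(lra)). pose proof (Rabs_triang_inv d (F2 y)).
    rewrite <- Rabs_Ropp in H1. replace (- (F2 y - F2 a)) with (d - F2 y) in H1 by (unfold d; ring). lra. }
  assert (Hz : z0 <= Rabs (F0 y)).
  { apply rp_small with (K := K') (Q := F2 y); try lra.
    - apply Rabs_pos_lt; auto. }
  specialize (H2 y ltac:(lra)). rewrite Z0, Rminus_0_r in H2. lra.
Qed.
End Vanish.

Lemma deriv_refl a b g g' : deriv_on a b g g' ->
  deriv_on a b (fun y => g (a + b - y)) (fun y => - g' (a + b - y)).
Proof.
  intros HD. apply Dlim_deriv. intros x Hx e He.
  destruct (deriv_Dlim a b g g' (a + b - x) HD ltac:(lra) e He) as [d [Hd Hd']].
  exists d. split; auto. intros y Hy Hyd.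
  specialize (Hd' (a + b - y) ltac:(lra)).
  replace (a + b - y - (a + b - x)) with (- (y - x)) in Hd' by ring.
  rewrite Rabs_Ropp in Hd'. specialize (Hd' Hyd).
  replace (g (a + b - y) - g (a + b - x) - - g' (a + b - x) * (y - x)) with
    (g (a + b - y) - g (a + b - x) - g' (a + b - x) * - (y - x)) by ring. auto.
Qed.

Lemma P_small al s0 eps : 0 < al -> 0 < s0 -> 0 < eps -> exists s, 0 < s <= s0 /\ Rpower s al <= eps.
Proof.
  intros Hal Hs0 He. exists (Rmin s0 (Rpower eps (/ al))).
  assert (0 < Rpower eps (/ al)) by apply exp_pos.
  split; [split; [apply Rmin_pos; lra| apply Rmin_l]|].
  replace eps with (Rpower (Rpower eps (/ al)) al) at 2.
  - apply Rle_Rpower_l; [lra|]. split; [apply Rmin_pos; lra| apply Rmin_r].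
  - rewrite Rpower_mult, Rinv_l, Rpower_1; lra.
Qed.

Lemma lim_P al s0 X Y Z : 0 < al -> 0 < s0 -> 0 <= Z ->
  (forall s, 0 < s <= s0 -> X <= Y + Rpower s al * Z) -> X <= Y.
Proof.
  intros Hal Hs0 HZ H. destruct (Rle_dec X Y) as [|Hn]; auto. exfalso.
  destruct (P_small al s0 ((X - Y) / (2 * (Z + 1))) Hal Hs0) as [s [Hs HP]].
  { apply Rdiv_lt_0_compat; lra. }
  specialize (H s Hs).
  assert (Rpower s al * Z <= (X - Y) / (2 * (Z + 1)) * Z) by (apply Rmult_le_compat_r; lra).
  assert ((X - Y) / (2 * (Z + 1)) * Z < X - Y).
  { apply Rmult_lt_reg_r with (2 * (Z + 1)); [lra|]. field_simplify; nra. }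
  lra.
Qed.

Lemma div_s3 X W s : 0 < s -> Rabs (X * s ^ 3) <= W * s ^ 3 -> Rabs X <= W.
Proof.
  intros Hs H. rewrite Rabs_mult, (Rabs_right (s ^ 3)) in H by (apply Rle_ge, pow_le; lra).
  apply Rmult_le_reg_r with (s ^ 3); auto. apply pow_lt; lra.
Qed.

Section ODE.
Variables (delta al s0 k M A : R) (c : R -> R) (G Gt : R -> R -> R).
Hypotheses (Hd : 0 < delta) (Hal : 0 < al) (Hs0 : 0 < s0) (HM : 0 <= M) (HA : 0 <= A)
  (DG : forall s, 0 < s <= s0 -> deriv_on 0 delta (G s) (Gt s))
  (E0 : forall s t, 0 < s <= s0 -> 0 <= t <= delta -> Rabs (G s t - c t * s ^ 3) <= M * s ^ 3 * Rpower s al)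
  (Et : forall s t, 0 < s <= s0 -> 0 <= t <= delta -> Rabs (Gt s t + k * c t ^ 2 * s ^ 3) <= A * s ^ 3 * Rpower s al)
  (Bc : forall t, 0 <= t <= delta -> Rabs (c t) <= M).

Let L := Rabs k * M ^ 2.

Lemma ode_lip t t' : 0 <= t <= t' -> t' <= delta -> Rabs (c t' - c t) <= L * (t' - t).
Proof.
  intros H1 H2.
  apply (lim_P al s0 _ _ (A * (t' - t) + 2 * M)); auto. { nra. }
  intros s Hs. assert (Hs3 : 0 < s ^ 3) by (apply pow_lt; lra).
  assert (HP : 0 < Rpower s al) by apply exp_pos.
  assert (HV := mvi t t' (G s) (Gt s) ((Rabs k * M ^ 2 + A * Rpower s al) * s ^ 3) ltac:(lra)).
  assert (HV' : Rabs (G s t' - G s t) <= (Rabs k * M ^ 2 + A * Rpower s al) * s ^ 3 * (t' - t)).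
  { apply HV.
    - intros x Hx. apply Dlim_sub with 0 delta; try lra. apply deriv_Dlim; auto. lra.
    - intros x Hx. pose proof (Et s x Hs ltac:(lra)) as Et1.
      assert (Rabs (k * c x ^ 2 * s ^ 3) <= Rabs k * M ^ 2 * s ^ 3).
      { rewrite !Rabs_mult. rewrite (Rabs_right (s ^ 3)) by lra.
        apply Rmult_le_compat_r; [lra|]. apply Rmult_le_compat_l; [apply Rabs_pos|].
        rewrite <- RPow_abs. specialize (Bc x ltac:(lra)). pose proof (Rabs_pos (c x)).
        simpl. nra. }
      replace (Gt s x) with ((Gt s x + k * c x ^ 2 * s ^ 3) - k * c x ^ 2 * s ^ 3) by ring.
      eapply Rle_trans; [apply Rabs_triang|]. rewrite Rabs_Ropp. nra. }
  apply div_s3 with s; [lra|].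
  pose proof (E0' := E0 s t' Hs ltac:(lra)). specialize (E0 s t Hs ltac:(lra)).
  replace ((c t' - c t) * s ^ 3) with ((G s t' - G s t) - (G s t' - c t' * s ^ 3) + (G s t - c t * s ^ 3)) by ring.
  eapply Rle_trans; [apply Rabs_triang|].
  eapply Rle_trans; [apply Rplus_le_compat_r; apply Rabs_triang|]. rewrite Rabs_Ropp.
  unfold L. nra.
Qed.

Lemma ode_quad t t' : 0 <= t <= delta -> 0 <= t' <= delta ->
  Rabs (c t' - c t + k * c t ^ 2 * (t' - t)) <= 2 * Rabs k * M * L * (t' - t) ^ 2.
Proof.
  intros H1 H2.
  apply (lim_P al s0 _ _ (A * Rabs (t' - t) + 2 * M)); auto. { pose proof (Rabs_pos (t' - t)); nra. }
  intros s Hs. assert (Hs3 : 0 < s ^ 3) by (apply pow_lt; lra).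
  assert (HP : 0 < Rpower s al) by apply exp_pos.
  set (E := (2 * Rabs k * M * L * Rabs (t' - t) + A * Rpower s al) * s ^ 3).
  assert (HB : forall y, 0 <= y <= delta -> Rabs (y - t) <= Rabs (t' - t) ->
            Rabs (Gt s y - (- k * c t ^ 2 * s ^ 3)) <= E).
  { intros y Hy Hyt. pose proof (Et s y Hs Hy) as Et1.
    replace (Gt s y - - k * c t ^ 2 * s ^ 3) with ((Gt s y + k * c y ^ 2 * s ^ 3) - k * (c y - c t) * (c y + c t) * s ^ 3) by ring.
    eapply Rle_trans; [apply Rabs_triang|]. rewrite Rabs_Ropp.
    assert (Hl : Rabs (c y - c t) <= L * Rabs (y - t)).
    { destruct (Rle_dec t y).
      - rewrite (Rabs_right (y - t)) by lra. apply ode_lip; lra.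
      - rewrite <- Rabs_Ropp, (Rabs_left (y - t)) by lra.
        replace (- (c y - c t)) with (c t - c y) by ring. replace (- (y - t)) with (t - y) by ring.
        apply ode_lip; lra. }
    assert (Hs2 : Rabs (c y + c t) <= 2 * M).
    { eapply Rle_trans; [apply Rabs_triang|]. pose proof (Bc y Hy); pose proof (Bc t H1); lra. }
    rewrite !Rabs_mult, (Rabs_right (s ^ 3)) by lra.
    unfold E. 
    assert (Rabs (c y - c t) * Rabs (c y + c t) <= L * Rabs (t' - t) * (2 * M)).
    { apply Rmult_le_compat; try apply Rabs_pos; auto. eapply Rle_trans; [exact Hl|].
      apply Rmult_le_compat_l; auto. unfold L. pose proof (Rabs_pos k). apply Rmult_le_pos; auto. apply pow_le; auto. }
    pose proof (Rabs_pos k). pose proof (Rabs_pos (t' - t)).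
    assert (Rabs k * (Rabs (c y - c t) * Rabs (c y + c t)) * s ^ 3 <= Rabs k * (L * Rabs (t' - t) * (2 * M)) * s ^ 3).
    { apply Rmult_le_compat_r; [lra|]. apply Rmult_le_compat_l; auto. }
    nra. }
  assert (HV : Rabs (G s t' - G s t - (- k * c t ^ 2 * s ^ 3) * (t' - t)) <= E * Rabs (t' - t)).
  { destruct (Rle_dec t t').
    - assert (K := mvi2 0 delta (G s) (Gt s) (fun y => - k * c t ^ 2 * s ^ 3 * y) (fun _ => - k * c t ^ 2 * s ^ 3) t t' E (DG s Hs)).
      rewrite (Rabs_right (t' - t)) by lra.
      replace (G s t' - G s t - - k * c t ^ 2 * s ^ 3 * (t' - t)) with
        (G s t' - - k * c t ^ 2 * s ^ 3 * t' - (G s t - - k * c t ^ 2 * s ^ 3 * t)) by ring.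
      apply K; try lra.
      + intros x; auto_derive; auto; ring.
      + intros y Hy. apply HB; [lra|]. rewrite !Rabs_right; lra.
    - assert (K := mvi2 0 delta (G s) (Gt s) (fun y => - k * c t ^ 2 * s ^ 3 * y) (fun _ => - k * c t ^ 2 * s ^ 3) t' t E (DG s Hs)).
      rewrite (Rabs_left (t' - t)) by lra.
      replace (G s t' - G s t - - k * c t ^ 2 * s ^ 3 * (t' - t)) with
        (- (G s t - - k * c t ^ 2 * s ^ 3 * t - (G s t' - - k * c t ^ 2 * s ^ 3 * t'))) by ring.
      rewrite Rabs_Ropp. replace (- (t' - t)) with (t - t') by ring.
      apply K; try lra.
      + intros x; auto_derive; auto; ring.
      + intros y Hy. apply HB; [lra|]. rewrite Rabs_left1 by lra. rewrite Rabs_left; lra. }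
  apply div_s3 with s; [lra|].
  pose proof (E0' := E0 s t' Hs H2). specialize (E0 s t Hs H1).
  replace ((c t' - c t + k * c t ^ 2 * (t' - t)) * s ^ 3) with
    ((G s t' - G s t - (- k * c t ^ 2 * s ^ 3) * (t' - t)) - (G s t' - c t' * s ^ 3) + (G s t - c t * s ^ 3)) by ring.
  eapply Rle_trans; [apply Rabs_triang|].
  eapply Rle_trans; [apply Rplus_le_compat_r; apply Rabs_triang|]. rewrite Rabs_Ropp.
  unfold E in HV. 
  replace ((2 * Rabs k * M * L * (t' - t) ^ 2 + Rpower s al * (A * Rabs (t' - t) + 2 * M)) * s ^ 3)
    with ((2 * Rabs k * M * L * Rabs (t' - t) + A * Rpower s al) * s ^ 3 * Rabs (t' - t) + M * s ^ 3 * Rpower s al + M * s ^ 3 * Rpower s al).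
  - lra.
  - replace ((t' - t) ^ 2) with (Rabs (t' - t) * Rabs (t' - t)). ring.
    rewrite <- Rabs_mult. simpl. rewrite Rmult_1_r. apply Rabs_right. apply Rle_ge, Rle_0_sqr.
Qed.

Lemma ode_deriv : deriv_on 0 delta c (fun t => - k * c t ^ 2).
Proof.
  apply Dlim_deriv. intros t Ht e He.
  set (Q := 2 * Rabs k * M * L + 1).
  assert (HQ : 0 < Q). { unfold Q, L. pose proof (Rabs_pos k). assert (0 <= M ^ 2) by (apply pow_le; auto).
    assert (0 <= Rabs k * M ^ 2) by (apply Rmult_le_pos; auto). 
    assert (0 <= 2 * Rabs k * M * (Rabs k * M ^ 2)) by (repeat apply Rmult_le_pos; lra). lra. }
  exists (e / Q). split; [apply Rdiv_lt_0_compat; auto|]. intros y Hy Hyd.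
  pose proof (ode_quad t y Ht Hy).
  replace (c y - c t - - k * c t ^ 2 * (y - t)) with (c y - c t + k * c t ^ 2 * (y - t)) by ring.
  eapply Rle_trans; [exact H|].
  replace ((y - t) ^ 2) with (Rabs (y - t) * Rabs (y - t)).
  2:{ rewrite <- Rabs_mult. simpl. rewrite Rmult_1_r. apply Rabs_right. apply Rle_ge, Rle_0_sqr. }
  pose proof (Rabs_pos (y - t)).
  assert (Q * Rabs (y - t) <= e).
  { apply Rmult_lt_compat_l with (r := Q) in Hyd; auto. 
    replace (Q * (e / Q)) with e in Hyd by (field; lra). lra. }
  assert (2 * Rabs k * M * L <= Q) by (unfold Q; lra).
  assert (0 <= 2 * Rabs k * M * L).
  { unfold L. pose proof (Rabs_pos k). repeat apply Rmult_le_pos; try lra; apply pow_le; lra. }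
  apply Rle_trans with (Q * Rabs (y - t) * Rabs (y - t)).
  - rewrite <- Rmult_assoc. apply Rmult_le_compat_r; auto. apply Rmult_le_compat_r; auto.
  - apply Rmult_le_compat_r; auto.
Qed.
End ODE.

Lemma deriv_bound phi z D : is_derive phi z D -> forall e, 0 < e -> exists d, 0 < d /\
  forall w, Rabs (w - z) < d -> Rabs (phi w - phi z - D * (w - z)) <= e * Rabs (w - z).
Proof.
  intros H e He. destruct (is_derive_Dlim (z - 1) (z + 1) phi (fun _ => D) z H e He) as [d [Hd Hd']].
  exists (Rmin d 1). split; [apply Rmin_pos; lra|]. intros w Hw.
  assert (Rabs (w - z) < d) by (eapply Rlt_le_trans; [exact Hw| apply Rmin_l]).
  assert (Rabs (w - z) < 1) by (eapply Rlt_le_trans; [exact Hw| apply Rmin_r]).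
  apply Hd'; auto. revert H1; unfold Rabs; destruct Rcase_abs; lra.
Qed.

Lemma Dlim_comp lo hi c c' phi D dd x : lo <= x <= hi -> Dlim lo hi c c' x -> is_derive phi (c x) D ->
  dd x = D * c' x -> Dlim lo hi (fun y => phi (c y)) dd x.
Proof.
  intros Hx Hc Hp Hdd e He. rewrite Hdd.
  set (e1 := e / (2 * (Rabs (c' x) + 1))).
  assert (He1 : 0 < e1) by (unfold e1; apply Rdiv_lt_0_compat; pose proof (Rabs_pos (c' x)); lra).
  set (e2 := Rmin 1 (e / (2 * (Rabs D + 1)))).
  assert (He2 : 0 < e2) by (unfold e2; apply Rmin_pos; [lra| apply Rdiv_lt_0_compat; pose proof (Rabs_pos D); lra]).
  destruct (deriv_bound phi (c x) D Hp e1 He1) as [d1 [Hd1 Hd1']].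
  destruct (Hc e2 He2) as [d2 [Hd2 Hd2']].
  destruct (Dlim_wcont lo hi c c' x Hc d1 Hd1) as [d3 [Hd3 Hd3']].
  exists (Rmin d2 d3). split; [apply Rmin_pos; lra|]. intros y Hy Hyd.
  assert (Rabs (y - x) < d2) by (eapply Rlt_le_trans; [exact Hyd| apply Rmin_l]).
  assert (Rabs (y - x) < d3) by (eapply Rlt_le_trans; [exact Hyd| apply Rmin_r]).
  specialize (Hd2' y Hy H). specialize (Hd3' y Hy H0). specialize (Hd1' (c y) Hd3').
  assert (Hcc : Rabs (c y - c x) <= (Rabs (c' x) + 1) * Rabs (y - x)).
  { replace (c y - c x) with ((c y - c x - c' x * (y - x)) + c' x * (y - x)) by ring.
    eapply Rle_trans; [apply Rabs_triang|]. rewrite Rabs_mult.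
    assert (e2 <= 1) by apply Rmin_l. pose proof (Rabs_pos (y - x)). nra. }
  replace (phi (c y) - phi (c x) - D * c' x * (y - x)) with
    ((phi (c y) - phi (c x) - D * (c y - c x)) + D * (c y - c x - c' x * (y - x))) by ring.
  eapply Rle_trans; [apply Rabs_triang|]. rewrite Rabs_mult.
  pose proof (Rabs_pos (y - x)). pose proof (Rabs_pos D). pose proof (Rabs_pos (c' x)).
  assert (A1 : e1 * Rabs (c y - c x) <= e / 2 * Rabs (y - x)).
  { apply Rle_trans with (e1 * ((Rabs (c' x) + 1) * Rabs (y - x))).
    - apply Rmult_le_compat_l; lra.
    - unfold e1. right. field. lra. }
  assert (A2 : Rabs D * (e2 * Rabs (y - x)) <= e / 2 * Rabs (y - x)).
  { assert (e2 <= e / (2 * (Rabs D + 1))) by apply Rmin_r.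
    assert (Rabs D * e2 <= e / 2).
    { apply Rle_trans with (Rabs D * (e / (2 * (Rabs D + 1)))).
      - apply Rmult_le_compat_l; lra.
      - apply Rmult_le_reg_r with (2 * (Rabs D + 1)); [lra|].
        field_simplify; [nra| lra]. }
    rewrite <- Rmult_assoc. apply Rmult_le_compat_r; lra. }
  assert (Rabs D * Rabs (c y - c x - c' x * (y - x)) <= Rabs D * (e2 * Rabs (y - x))) by (apply Rmult_le_compat_l; lra).
  lra.
Qed.

Lemma beta_exists delta k B c : 0 < delta -> 0 <= B ->
  deriv_on 0 delta c (fun t => - k * c t ^ 2) ->
  (forall t, 0 <= t <= delta -> 0 <= c t) -> (forall t, 0 <= t <= delta -> Rabs (c t) <= B) ->
  exists beta beta' : R -> R, deriv_on 0 delta beta beta' /\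
    (forall t, 0 <= t <= delta -> beta' t = - (k / 3) * beta t ^ 4) /\
    (forall t, 0 <= t <= delta -> beta t ^ 3 = c t).
Proof.
  intros Hd HB Dc Hpos Hbd.
  assert (Gr : forall t0, 0 <= t0 <= delta -> c t0 = 0 -> forall t, 0 <= t <= delta -> c t = 0).
  { apply gronwall with (fun t => - k * c t ^ 2) (Rabs k * B); auto.
    - apply Rmult_le_pos; auto; apply Rabs_pos.
    - intros t Ht _. rewrite Rabs_mult, Rabs_Ropp, <- RPow_abs. simpl.
      pose proof (Rabs_pos k). pose proof (Rabs_pos (c t)). specialize (Hbd t Ht).
      rewrite Rmult_1_r. rewrite (Rmult_assoc (Rabs k)). apply Rmult_le_compat_l; auto.
      apply Rmult_le_compat_r; auto. }
  destruct (Req_dec (c 0) 0) as [H0|H0].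
  - exists (fun _ => 0), (fun _ => 0). split; [|split].
    + apply Dlim_deriv. intros x Hx. apply is_derive_Dlim. auto_derive; auto.
    + intros; ring.
    + intros t Ht. rewrite (Gr 0 ltac:(lra) H0 t Ht). ring.
  - assert (Hp : forall t, 0 <= t <= delta -> 0 < c t).
    { intros t Ht. destruct (Hpos t Ht) as [|E]; auto. exfalso. apply H0.
      apply (Gr t Ht (eq_sym E)). lra. }
    exists (fun t => Rpower (c t) (1/3)), (fun t => (1/3 * Rpower (c t) (1/3 - 1)) * (- k * c t ^ 2)).
    split; [|split].
    + apply Dlim_deriv. intros x Hx.
      apply (Dlim_comp 0 delta c) with (phi := fun z => Rpower z (1/3)) (c' := fun t => - k * c t ^ 2) (D := 1/3 * Rpower (c x) (1/3 - 1)); auto.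
      * apply deriv_Dlim; auto.
      * apply is_derive_Reals. apply derivable_pt_lim_power. auto.
    + intros t Ht. specialize (Hp t Ht).
      replace (c t ^ 2) with (Rpower (c t) (INR 2)) by (apply Rpower_pow; auto).
      replace (Rpower (c t) (1/3) ^ 4) with (Rpower (Rpower (c t) (1/3)) (INR 4)) by (apply Rpower_pow; apply exp_pos).
      rewrite Rpower_mult.
      replace (1/3 * Rpower (c t) (1/3 - 1) * (- k * Rpower (c t) (INR 2))) with
        (- (k/3) * (Rpower (c t) (1/3 - 1) * Rpower (c t) (INR 2))) by field.
      rewrite <- Rpower_plus. f_equal. f_equal. simpl. field.
    + intros t Ht. specialize (Hp t Ht).
      rewrite <- Rpower_pow by apply exp_pos. rewrite Rpower_mult.
      replace (1/3 * INR 3) with 1 by (simpl; field). apply Rpower_1; auto.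
Qed.

Lemma deriv_refl2 a b g g' : deriv_on a b g g' ->
  deriv_on a b (fun y => - g (a + b - y)) (fun y => g' (a + b - y)).
Proof.
  intros HD. apply Dlim_deriv. intros x Hx e He.
  destruct (deriv_Dlim a b g g' (a + b - x) HD ltac:(lra) e He) as [d [Hd Hd']].
  exists d. split; auto. intros y Hy Hyd.
  specialize (Hd' (a + b - y) ltac:(lra)).
  replace (a + b - y - (a + b - x)) with (- (y - x)) in Hd' by ring.
  rewrite Rabs_Ropp in Hd'. specialize (Hd' Hyd).
  replace (- g (a + b - y) - - g (a + b - x) - g' (a + b - x) * (y - x)) with
    (- (g (a + b - y) - g (a + b - x) - g' (a + b - x) * - (y - x))) by ring.
  rewrite Rabs_Ropp. auto.
Qed.

Lemma C3a_unpack a b al F0 F1 F2 F3 M : a < b -> 0 < al -> C3a_norm_le a b al F0 F1 F2 F3 M ->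
  exists H, 0 <= H <= M /\
   (forall x y, a <= x <= b -> a <= y <= b -> x <> y -> Rabs (F3 x - F3 y) <= H * Rpower (Rabs (x - y)) al) /\
   (forall x, a <= x <= b -> Rabs (F0 x) <= M /\ Rabs (F1 x) <= M /\ Rabs (F2 x) <= M /\ Rabs (F3 x) <= M).
Proof.
  intros Hab Hal [M0 [M1 [M2 [M3 [H [B0 [B1 [B2 [B3 [BH Hs]]]]]]]]]].
  assert (Ha : a <= a <= b) by lra.
  pose proof (B0 a Ha); pose proof (B1 a Ha); pose proof (B2 a Ha); pose proof (B3 a Ha).
  pose proof (Rabs_pos (F0 a)); pose proof (Rabs_pos (F1 a)); pose proof (Rabs_pos (F2 a)); pose proof (Rabs_pos (F3 a)).
  assert (HH : 0 <= H).
  { pose proof (BH a b Ha ltac:(lra) ltac:(lra)). pose proof (Rabs_pos (F3 a - F3 b)).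
    assert (0 < Rpower (Rabs (a - b)) al) by apply exp_pos.
    destruct (Rle_dec 0 H); auto. exfalso.
    assert (H * Rpower (Rabs (a - b)) al < 0) by (apply Rmult_neg_pos; lra). lra. }
  exists H. split; [lra|]. split; auto.
  intros x Hx. pose proof (B0 x Hx); pose proof (B1 x Hx); pose proof (B2 x Hx); pose proof (B3 x Hx). lra.
Qed.

Lemma mb x y X Y : Rabs x <= X -> Rabs y <= Y -> Rabs (x * y) <= X * Y.
Proof. intros. rewrite Rabs_mult. apply Rmult_le_compat; auto; apply Rabs_pos. Qed.

Lemma rhs_simpl (m : nat) mu1 X : (2 <= m)%nat -> mu1 / INR m * (INR m * X) = mu1 * X.
Proof. intros. assert (0 < INR m) by (apply lt_0_INR; lia). field. lra. Qed.

Lemma pow_split (m : nat) F : (2 <= m)%nat -> F ^ (m - 1) = F * F ^ (m - 2).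
Proof. intros. replace (m - 1)%nat with (S (m - 2)) by lia. reflexivity. Qed.

Lemma gron_rhs (m : nat) al1 mu1 K M F0 F1 F2 F3 : (2 <= m)%nat -> 0 <= M -> F0 <> 0 ->
  Rpower (Rabs F0) (-(2/3)) * Rabs F1 <= K -> Rpower (Rabs F0) (-(1/3)) * Rabs F2 <= K ->
  Rabs F0 <= K -> Rabs F3 <= K -> Rabs F0 <= M -> Rabs F1 <= M ->
  Rabs (F0 * F3 + al1 * F1 * F2 + mu1 / INR m * (INR m * F0 ^ (m - 1) * F1))
    <= (K + Rabs al1 * K ^ 2 + Rabs mu1 * M ^ (m - 1)) * Rabs F0.
Proof.
  intros Hm HM Hne Y1 Y2 Y0 Y3 B0 B1.
  assert (Hz : 0 < Rabs F0) by (apply Rabs_pos_lt; auto).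
  assert (HK : 0 <= K) by (pose proof (Rabs_pos F0); lra).
  replace (INR m * F0 ^ (m - 1) * F1) with (INR m * (F0 ^ (m - 1) * F1)) by ring.
  rewrite rhs_simpl by auto.
  set (P1 := Rpower (Rabs F0) (2/3)). set (P2 := Rpower (Rabs F0) (1/3)).
  assert (HP1 : 0 < P1) by apply exp_pos. assert (HP2 : 0 < P2) by apply exp_pos.
  assert (HP12 : P1 * P2 = Rabs F0).
  { unfold P1, P2. rewrite <- Rpower_plus. replace (2/3 + 1/3) with 1 by field. apply Rpower_1; auto. }
  assert (C1 : Rabs F1 <= K * P1).
  { rewrite Rpower_Ropp in Y1. fold P1 in Y1.
    apply Rmult_le_compat_l with (r := P1) in Y1; [|lra].
    rewrite <- Rmult_assoc, Rinv_r in Y1 by lra. lra. }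
  assert (C2 : Rabs F2 <= K * P2).
  { rewrite Rpower_Ropp in Y2. fold P2 in Y2.
    apply Rmult_le_compat_l with (r := P2) in Y2; [|lra].
    rewrite <- Rmult_assoc, Rinv_r in Y2 by lra. lra. }
  assert (T1 : Rabs (F0 * F3) <= K * Rabs F0).
  { rewrite Rabs_mult, Rmult_comm. apply Rmult_le_compat_r; auto; apply Rabs_pos. }
  assert (T2 : Rabs (al1 * F1 * F2) <= Rabs al1 * K ^ 2 * Rabs F0).
  { rewrite Rmult_assoc, Rabs_mult, Rmult_assoc. apply Rmult_le_compat_l; [apply Rabs_pos|].
    eapply Rle_trans; [apply mb; [exact C1| exact C2]|]. right. rewrite <- HP12. ring. }
  assert (T3 : Rabs (mu1 * (F0 ^ (m - 1) * F1)) <= Rabs mu1 * M ^ (m - 1) * Rabs F0).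
  { rewrite Rabs_mult, Rmult_assoc. apply Rmult_le_compat_l; [apply Rabs_pos|].
    rewrite (pow_split m F0), (pow_split m M) by auto.
    rewrite !Rabs_mult, <- RPow_abs.
    apply Rle_trans with (Rabs F0 * (M ^ (m - 2) * M)).
    - rewrite Rmult_assoc. apply Rmult_le_compat_l; [apply Rabs_pos|].
      apply Rmult_le_compat; auto; try apply pow_le; try apply Rabs_pos.
      apply pow_incr. split; auto. apply Rabs_pos.
    - right; ring. }
  eapply Rle_trans; [apply Rabs_triang|].
  eapply Rle_trans; [apply Rplus_le_compat_r; apply Rabs_triang|]. lra.
Qed.

Lemma sig_abs (sg : R) : sg = 1 \/ sg = -1 -> Rabs sg = 1.
Proof. intros [->| ->]; unfold Rabs; destruct Rcase_abs; lra. Qed.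

Lemma rhs_exp (m : nat) al1 mu1 M sg c s P F0 F1 F2 F3 : (2 <= m)%nat -> 0 <= M ->
  (sg = 1 \/ sg = -1) -> 0 < s <= 1 -> 0 < P <= 1 -> s <= P -> Rabs c <= M ->
  Rabs F0 <= M ->
  Rabs (F0 - c * s ^ 3) <= M * s ^ 3 * P -> Rabs (F1 - sg * 3 * c * s ^ 2) <= M * s ^ 2 * P ->
  Rabs (F2 - 6 * c * s) <= M * s * P -> Rabs (F3 - sg * 6 * c) <= M * P ->
  Rabs (F0 * F3 + al1 * F1 * F2 + mu1 / INR m * (INR m * F0 ^ (m - 1) * F1)
        - sg * (6 + 18 * al1) * c ^ 2 * s ^ 3)
   <= (8 * M ^ 2 + Rabs al1 * (10 * M ^ 2) + Rabs mu1 * (8 * M ^ m)) * (s ^ 3 * P).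
Proof.
  intros Hm HM Hsg Hs HP HsP Hc B0 H0 H1 H2 H3.
  assert (Hs1 : Rabs sg = 1) by (apply sig_abs; auto).
  assert (Hsg2 : sg * sg = 1) by (destruct Hsg as [->| ->]; ring).
  replace (INR m * F0 ^ (m - 1) * F1) with (INR m * (F0 ^ (m - 1) * F1)) by ring.
  rewrite rhs_simpl by auto.
  set (e0 := F0 - c * s ^ 3) in *. set (e1 := F1 - sg * 3 * c * s ^ 2) in *.
  set (e2 := F2 - 6 * c * s) in *. set (e3 := F3 - sg * 6 * c) in *.
  assert (Hs2 : 0 < s ^ 2) by (apply pow_lt; lra). assert (Hs3 : 0 < s ^ 3) by (apply pow_lt; lra).
  assert (Hcs3 : Rabs (c * s ^ 3) <= M * s ^ 3).
  { rewrite Rabs_mult, (Rabs_right (s ^ 3)) by lra. apply Rmult_le_compat_r; lra. }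
  assert (T1 : Rabs (F0 * F3 - sg * 6 * c ^ 2 * s ^ 3) <= 8 * M ^ 2 * (s ^ 3 * P)).
  { replace (F0 * F3 - sg * 6 * c ^ 2 * s ^ 3) with ((c * s ^ 3) * e3 + e0 * (sg * 6 * c) + e0 * e3)
      by (unfold e0, e3; ring).
    assert (A1 := mb _ _ _ _ Hcs3 H3).
    assert (A2 : Rabs (e0 * (sg * 6 * c)) <= M * s ^ 3 * P * (6 * M)).
    { apply mb; auto. rewrite !Rabs_mult, Hs1, (Rabs_right 6) by lra. lra. }
    assert (A3 := mb _ _ _ _ H0 H3).
    assert (M * s ^ 3 * P * (M * P) <= M * s ^ 3 * P * M).
    { apply Rmult_le_compat_l; [apply Rmult_le_pos; [apply Rmult_le_pos|]; lra|]. nra. }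
    eapply Rle_trans; [apply Rabs_triang|].
    eapply Rle_trans; [apply Rplus_le_compat_r; apply Rabs_triang|].
    assert (E : 8 * M ^ 2 * (s ^ 3 * P) = M * s ^ 3 * (M * P) + M * s ^ 3 * P * (6 * M) + M * s ^ 3 * P * M) by ring.
    lra. }
  assert (T2 : Rabs (F1 * F2 - sg * 18 * c ^ 2 * s ^ 3) <= 10 * M ^ 2 * (s ^ 3 * P)).
  { replace (F1 * F2 - sg * 18 * c ^ 2 * s ^ 3) with ((sg * 3 * c * s ^ 2) * e2 + e1 * (6 * c * s) + e1 * e2)
      by (unfold e1, e2; ring).
    assert (Hb1 : Rabs (sg * 3 * c * s ^ 2) <= 3 * M * s ^ 2).
    { rewrite !Rabs_mult, Hs1, (Rabs_right 3), (Rabs_right (s ^ 2)) by lra. nra. }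
    assert (Hb2 : Rabs (6 * c * s) <= 6 * M * s).
    { rewrite !Rabs_mult, (Rabs_right 6), (Rabs_right s) by lra. nra. }
    assert (A1 := mb _ _ _ _ Hb1 H2). assert (A2 := mb _ _ _ _ H1 Hb2). assert (A3 := mb _ _ _ _ H1 H2).
    assert (M * s ^ 2 * P * (M * s * P) <= M * s ^ 2 * P * (M * s)).
    { apply Rmult_le_compat_l; [apply Rmult_le_pos; [apply Rmult_le_pos|]; lra|].
      assert (0 <= M * s) by nra. nra. }
    eapply Rle_trans; [apply Rabs_triang|].
    eapply Rle_trans; [apply Rplus_le_compat_r; apply Rabs_triang|].
    assert (E : 10 * M ^ 2 * (s ^ 3 * P) = 3 * M * s ^ 2 * (M * s * P) + M * s ^ 2 * P * (6 * M * s) + M * s ^ 2 * P * (M * s)) by (simpl; ring).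
    lra. }
  assert (T3 : Rabs (F0 ^ (m - 1) * F1) <= 8 * M ^ m * (s ^ 3 * P)).
  { assert (HF0 : Rabs F0 <= 2 * M * s ^ 3).
    { replace F0 with (c * s ^ 3 + e0) by (unfold e0; ring).
      eapply Rle_trans; [apply Rabs_triang|].
      assert (M * s ^ 3 * P <= M * s ^ 3 * 1) by (apply Rmult_le_compat_l; [apply Rmult_le_pos|]; lra).
      lra. }
    assert (HF1 : Rabs F1 <= 4 * M * s ^ 2).
    { replace F1 with (sg * 3 * c * s ^ 2 + e1) by (unfold e1; ring).
      eapply Rle_trans; [apply Rabs_triang|].
      assert (Rabs (sg * 3 * c * s ^ 2) <= 3 * M * s ^ 2).
      { rewrite !Rabs_mult, Hs1, (Rabs_right 3), (Rabs_right (s ^ 2)) by lra. nra. }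
      assert (M * s ^ 2 * P <= M * s ^ 2 * 1) by (apply Rmult_le_compat_l; [apply Rmult_le_pos|]; lra).
      lra. }
    rewrite (pow_split m F0) by auto.
    rewrite !Rabs_mult, <- RPow_abs.
    assert (Hpw : Rabs F0 ^ (m - 2) <= M ^ (m - 2)) by (apply pow_incr; split; auto; apply Rabs_pos).
    assert (Hpw0 : 0 <= Rabs F0 ^ (m - 2)) by (apply pow_le; apply Rabs_pos).
    apply Rle_trans with (2 * M * s ^ 3 * M ^ (m - 2) * (4 * M * s ^ 2)).
    - apply Rmult_le_compat; try apply Rabs_pos; auto.
      + apply Rmult_le_pos; auto; apply Rabs_pos.
      + apply Rmult_le_compat; auto; apply Rabs_pos.
    - replace m with ((m - 2) + 2)%nat at 2 by lia. rewrite pow_add.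
      replace (2 * M * s ^ 3 * M ^ (m - 2) * (4 * M * s ^ 2)) with (8 * (M ^ (m - 2) * M ^ 2) * (s ^ 3 * s ^ 2)) by ring.
      apply Rmult_le_compat_l.
      + assert (0 <= M ^ (m - 2)) by (apply pow_le; auto). assert (0 <= M ^ 2) by (apply pow_le; auto). nra.
      + apply Rmult_le_compat_l; [lra|]. simpl. nra. }
  replace (F0 * F3 + al1 * F1 * F2 + mu1 * (F0 ^ (m - 1) * F1) - sg * (6 + 18 * al1) * c ^ 2 * s ^ 3) with
    ((F0 * F3 - sg * 6 * c ^ 2 * s ^ 3) + al1 * (F1 * F2 - sg * 18 * c ^ 2 * s ^ 3) + mu1 * (F0 ^ (m - 1) * F1)) by ring.
  eapply Rle_trans; [apply Rabs_triang|].
  eapply Rle_trans; [apply Rplus_le_compat_r; apply Rabs_triang|].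
  rewrite !Rabs_mult.
  assert (Rabs al1 * Rabs (F1 * F2 - sg * 18 * c ^ 2 * s ^ 3) <= Rabs al1 * (10 * M ^ 2 * (s ^ 3 * P))) by (apply Rmult_le_compat_l; auto; apply Rabs_pos).
  assert (Rabs mu1 * Rabs (F0 ^ (m - 1) * F1) <= Rabs mu1 * (8 * M ^ m * (s ^ 3 * P))) by (apply Rmult_le_compat_l; auto; apply Rabs_pos).
  rewrite Rabs_mult in *. lra.
Qed.

Lemma exp_le' x y : x <= y -> exp x <= exp y.
Proof. intros [H|H]; [left; apply exp_increasing; auto| right; subst; auto]. Qed.

Lemma P_bounds s al : 0 < s <= 1 -> 0 < al <= 1 -> s <= Rpower s al /\ Rpower s al <= 1.
Proof.
  intros Hs Hal. unfold Rpower.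
  assert (Hl : ln s <= 0).
  { destruct (Req_dec s 1) as [->|Hne]; [rewrite ln_1; lra|]. rewrite <- ln_1. left; apply ln_increasing; lra. }
  split.
  - rewrite <- (exp_ln s) at 1 by lra. apply exp_le'. nra.
  - rewrite <- exp_0. apply exp_le'. nra.
Qed.

Lemma uniq_ode delta k B c1 c2 : 0 < delta -> 0 <= B ->
  deriv_on 0 delta c1 (fun t => - k * c1 t ^ 2) -> deriv_on 0 delta c2 (fun t => - k * c2 t ^ 2) ->
  (forall t, 0 <= t <= delta -> Rabs (c1 t) <= B) -> (forall t, 0 <= t <= delta -> Rabs (c2 t) <= B) ->
  c1 0 = c2 0 -> forall t, 0 <= t <= delta -> c1 t = c2 t.
Proof.
  intros Hd HB D1 D2 B1 B2 H0 t Ht.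
  assert (Dd : deriv_on 0 delta (fun t => c1 t - c2 t) (fun t => - k * c1 t ^ 2 - - k * c2 t ^ 2)).
  { apply Dlim_deriv. intros x Hx. apply Dlim_minus; apply deriv_Dlim; auto. }
  assert (G := gronwall 0 delta _ _ (Rabs k * (2 * B)) Dd).
  enough (c1 t - c2 t = 0) by lra.
  apply G with 0; auto; try lra.
  - apply Rmult_le_pos; [apply Rabs_pos| lra].
  - intros u Hu _. replace (- k * c1 u ^ 2 - - k * c2 u ^ 2) with (- k * (c1 u + c2 u) * (c1 u - c2 u)) by ring.
    rewrite !Rabs_mult, Rabs_Ropp.
    apply Rmult_le_compat_r; [apply Rabs_pos|]. apply Rmult_le_compat_l; [apply Rabs_pos|]. eapply Rle_trans; [apply Rabs_triang|].
    pose proof (B1 u Hu); pose proof (B2 u Hu); lra.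
Qed.

Section Main.
Variables (alpha1 mu1 : R) (m : nat) (a b delta alpha : R).
Hypotheses (Hm : (2 <= m)%nat) (Hab : a < b) (Hd : 0 < delta) (Hal : 0 < alpha <= 1).
Variables (f f1 f2 f3 ft : R -> R -> R) (M K : R).
Hypotheses
 (HX : forall t, 0 <= t <= delta -> x_derivs a b (f t) (f1 t) (f2 t) (f3 t))
 (HMb : forall t, 0 <= t <= delta -> C3a_norm_le a b alpha (f t) (f1 t) (f2 t) (f3 t) M)
 (HKb : forall t, 0 <= t <= delta -> Y_bounded a b (f t) (f1 t) (f2 t) (f3 t) K)
 (HE : is_solution alpha1 mu1 m a b delta f f1 f2 f3 ft)
 (Hpos0 : forall x, a < x < b -> 0 < f 0 x)
 (Z0a : f 0 a = 0) (Z0b : f 0 b = 0).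

Lemma Mnn : 0 <= M.
Proof.
  destruct (C3a_unpack _ _ _ _ _ _ _ _ Hab (proj1 Hal) (HMb 0 ltac:(lra))) as [H [HH _]]. lra.
Qed.

Lemma Knn : 0 <= K.
Proof.
  destruct (HKb 0 ltac:(lra) a ltac:(lra)) as [_ [H _]]. pose proof (Rabs_pos (f 0 a)). lra.
Qed.

Let L := K + Rabs alpha1 * K ^ 2 + Rabs mu1 * M ^ (m - 1).

Lemma ft_eq x t : a <= x <= b -> 0 <= t <= delta ->
  ft t x = - (f t x * f3 t x + alpha1 * f1 t x * f2 t x + mu1 / INR m * (INR m * f t x ^ (m - 1) * f1 t x)).
Proof. intros Hx Ht. pose proof (proj2 (HE x Hx) t Ht). lra. Qed.

Lemma zero_prop x : a <= x <= b -> forall t0, 0 <= t0 <= delta -> f t0 x = 0 ->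
  forall t, 0 <= t <= delta -> f t x = 0.
Proof.
  intros Hx. apply (gronwall 0 delta (fun t => f t x) (fun t => ft t x) L (proj1 (HE x Hx))).
  - unfold L. pose proof Knn; pose proof Mnn. pose proof (Rabs_pos alpha1); pose proof (Rabs_pos mu1).
    assert (0 <= K ^ 2) by (apply pow_le; auto). assert (0 <= M ^ (m - 1)) by (apply pow_le; auto).
    assert (0 <= Rabs alpha1 * K ^ 2) by (apply Rmult_le_pos; auto).
    assert (0 <= Rabs mu1 * M ^ (m - 1)) by (apply Rmult_le_pos; auto). lra.
  - intros t Ht Hne. rewrite ft_eq by auto. rewrite Rabs_Ropp.
    destruct (HKb t Ht x Hx) as [HY [Y0 Y3]]. destruct (HY Hne) as [Y1 Y2].
    destruct (C3a_unpack _ _ _ _ _ _ _ _ Hab (proj1 Hal) (HMb t Ht)) as [H [_ [_ HB]]].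
    destruct (HB x Hx) as [B0 [B1 _]].
    apply gron_rhs; auto. apply Mnn.
Qed.

Lemma P1a t : 0 <= t <= delta -> f t a = 0.
Proof. intros Ht. apply zero_prop with 0; auto; lra. Qed.
Lemma P1b t : 0 <= t <= delta -> f t b = 0.
Proof. intros Ht. apply zero_prop with 0; auto; lra. Qed.

Lemma P1int x : a < x < b -> forall t, 0 <= t <= delta -> 0 < f t x.
Proof.
  intros Hx t Ht.
  assert (Hnz : forall u, 0 <= u <= delta -> f u x <> 0).
  { intros u Hu E. pose proof (zero_prop x ltac:(lra) u Hu E 0 ltac:(lra)). pose proof (Hpos0 x Hx). lra. }
  destruct (Rlt_le_dec 0 (f t x)) as [|Hle]; auto. exfalso.
  destruct Hle as [Hlt|Heq]; [|apply (Hnz t Ht); auto].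
  set (h := fun s => f (clamp 0 delta s) x).
  assert (Hc : continuity h).
  { intros s. unfold h. apply (Dlim_cont 0 delta (fun u => f u x) (fun u => ft u x)); [lra|].
    intros y Hy. apply deriv_Dlim; auto. apply (proj1 (HE x ltac:(lra))). }
  assert (H0 : h 0 = f 0 x) by (unfold h; rewrite clamp_id; auto; lra).
  assert (Ht' : h t = f t x) by (unfold h; rewrite clamp_id; auto).
  destruct (IVT_gen h 0 t 0 Hc) as [s [_ Hs]].
  { pose proof (Hpos0 x Hx). rewrite H0, Ht'. unfold Rmin, Rmax; destruct Rle_dec; lra. }
  unfold h in Hs. apply (Hnz (clamp 0 delta s)); auto. apply clamp_in; lra.
Qed.


Lemma van_a t : 0 <= t <= delta -> f1 t a = 0 /\ f2 t a = 0.
Proof.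
  intros Ht. destruct (HX t Ht) as [D0 [D1 D2]].
  assert (HY : forall x, a <= x <= b -> f t x <> 0 ->
       Rpower (Rabs (f t x)) (-(2/3)) * Rabs (f1 t x) <= K /\
       Rpower (Rabs (f t x)) (-(1/3)) * Rabs (f2 t x) <= K).
  { intros x Hx Hne. exact (proj1 (HKb t Ht x Hx) Hne). }
  pose proof (P1a t Ht).
  split; [exact (van1 a b K _ _ _ Hab D0 D1 H HY)| exact (van2 a b K _ _ _ _ Hab D0 D1 D2 H HY)].
Qed.

Definition refl (g : R -> R) := fun y => g (a + b - y).
Definition nrefl (g : R -> R) := fun y => - g (a + b - y).

Lemma refl_derivs t : 0 <= t <= delta ->
  x_derivs a b (refl (f t)) (nrefl (f1 t)) (refl (f2 t)) (nrefl (f3 t)).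
Proof.
  intros Ht. destruct (HX t Ht) as [D0 [D1 D2]]. unfold refl, nrefl.
  split; [|split].
  - apply deriv_refl; auto.
  - apply deriv_refl2; auto.
  - apply deriv_refl; auto.
Qed.

Lemma van_b t : 0 <= t <= delta -> f1 t b = 0 /\ f2 t b = 0.
Proof.
  intros Ht. destruct (refl_derivs t Ht) as [D0 [D1 D2]].
  assert (HY : forall x, a <= x <= b -> refl (f t) x <> 0 ->
       Rpower (Rabs (refl (f t) x)) (-(2/3)) * Rabs (nrefl (f1 t) x) <= K /\
       Rpower (Rabs (refl (f t) x)) (-(1/3)) * Rabs (refl (f2 t) x) <= K).
  { intros x Hx Hne. unfold refl, nrefl in *. rewrite Rabs_Ropp.
    exact (proj1 (HKb t Ht (a + b - x) ltac:(lra)) Hne). }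
  assert (Z : refl (f t) a = 0) by (unfold refl; replace (a + b - a) with b by ring; apply P1b; auto).
  assert (V1 : nrefl (f1 t) a = 0) by exact (van1 a b K _ _ _ Hab D0 D1 Z HY).
  assert (V2 : refl (f2 t) a = 0) by exact (van2 a b K _ _ _ _ Hab D0 D1 D2 Z HY).
  unfold refl, nrefl in V1, V2. replace (a + b - a) with b in V1, V2 by ring. lra.
Qed.

Lemma tay_a t M' : 0 <= t <= delta -> C3a_norm_le a b alpha (f t) (f1 t) (f2 t) (f3 t) M' ->
  forall s, 0 < s <= b - a ->
   Rabs (f t (a + s) - f3 t a / 6 * s ^ 3) <= M' * s ^ 3 * Rpower s alpha /\
   Rabs (f1 t (a + s) - f3 t a / 2 * s ^ 2) <= M' * s ^ 2 * Rpower s alpha /\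
   Rabs (f2 t (a + s) - f3 t a * s) <= M' * s * Rpower s alpha /\
   Rabs (f3 t (a + s) - f3 t a) <= M' * Rpower s alpha.
Proof.
  intros Ht HC s Hs.
  destruct (C3a_unpack _ _ _ _ _ _ _ _ Hab (proj1 Hal) HC) as [H [HH [Hol _]]].
  destruct (HX t Ht) as [D0 [D1 D2]]. destruct (van_a t Ht) as [Z1 Z2]. pose proof (P1a t Ht) as Z0.
  assert (HP : 0 < Rpower s alpha) by apply exp_pos.
  assert (HS : forall k, 0 <= s ^ k) by (intros; apply pow_le; lra).
  split; [|split; [|split]].
  - eapply Rle_trans; [exact (tay0 a b alpha H _ _ _ _ Hab (proj1 Hal) (proj1 HH) D0 D1 D2 Z0 Z1 Z2 Hol s Hs)|].
    repeat apply Rmult_le_compat_r; try lra; auto.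
  - eapply Rle_trans; [exact (tay1 a b alpha H _ _ _ Hab (proj1 Hal) (proj1 HH) D1 D2 Z1 Z2 Hol s Hs)|].
    repeat apply Rmult_le_compat_r; try lra; auto.
  - eapply Rle_trans; [exact (tay2 a b alpha H _ _ Hab (proj1 Hal) (proj1 HH) D2 Z2 Hol s Hs)|].
    repeat apply Rmult_le_compat_r; try lra; auto.
  - eapply Rle_trans; [exact (tay3 a b alpha H _ Hab Hol s Hs)|].
    repeat apply Rmult_le_compat_r; try lra; auto.
Qed.

Lemma tay_b t M' : 0 <= t <= delta -> C3a_norm_le a b alpha (f t) (f1 t) (f2 t) (f3 t) M' ->
  forall s, 0 < s <= b - a ->
   Rabs (f t (b - s) - (- f3 t b) / 6 * s ^ 3) <= M' * s ^ 3 * Rpower s alpha /\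
   Rabs (- f1 t (b - s) - (- f3 t b) / 2 * s ^ 2) <= M' * s ^ 2 * Rpower s alpha /\
   Rabs (f2 t (b - s) - (- f3 t b) * s) <= M' * s * Rpower s alpha /\
   Rabs (- f3 t (b - s) - (- f3 t b)) <= M' * Rpower s alpha.
Proof.
  intros Ht HC s Hs.
  destruct (C3a_unpack _ _ _ _ _ _ _ _ Hab (proj1 Hal) HC) as [H [HH [Hol _]]].
  destruct (refl_derivs t Ht) as [D0 [D1 D2]]. destruct (van_b t Ht) as [Z1 Z2]. pose proof (P1b t Ht) as Z0.
  assert (Hol' : forall x y, a <= x <= b -> a <= y <= b -> x <> y ->
    Rabs (nrefl (f3 t) x - nrefl (f3 t) y) <= H * Rpower (Rabs (x - y)) alpha).
  { intros x y Hx Hy Hne. unfold nrefl.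
    replace (- f3 t (a + b - x) - - f3 t (a + b - y)) with (- (f3 t (a + b - x) - f3 t (a + b - y))) by ring.
    rewrite Rabs_Ropp. replace (Rabs (x - y)) with (Rabs ((a + b - x) - (a + b - y))).
    - apply Hol; lra.
    - replace ((a + b - x) - (a + b - y)) with (y - x) by ring. apply Rabs_minus_sym. }
  assert (Z0' : refl (f t) a = 0) by (unfold refl; replace (a + b - a) with b by ring; auto).
  assert (Z1' : nrefl (f1 t) a = 0) by (unfold nrefl; replace (a + b - a) with b by ring; lra).
  assert (Z2' : refl (f2 t) a = 0) by (unfold refl; replace (a + b - a) with b by ring; auto).
  assert (HP : 0 < Rpower s alpha) by apply exp_pos.
  assert (HS : forall k, 0 <= s ^ k) by (intros; apply pow_le; lra).
  assert (E3 : nrefl (f3 t) a = - f3 t b) by (unfold nrefl; replace (a + b - a) with b by ring; auto).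
  assert (Eb : a + b - (a + s) = b - s) by ring.
  split; [|split; [|split]].
  - pose proof (tay0 a b alpha H _ _ _ _ Hab (proj1 Hal) (proj1 HH) D0 D1 D2 Z0' Z1' Z2' Hol' s Hs) as T.
    unfold refl, nrefl in T. rewrite Eb in T. replace (a + b - a) with b in T by ring.
    eapply Rle_trans; [exact T|]. repeat apply Rmult_le_compat_r; try lra; auto.
  - pose proof (tay1 a b alpha H _ _ _ Hab (proj1 Hal) (proj1 HH) D1 D2 Z1' Z2' Hol' s Hs) as T.
    unfold refl, nrefl in T. rewrite Eb in T. replace (a + b - a) with b in T by ring.
    eapply Rle_trans; [exact T|]. repeat apply Rmult_le_compat_r; try lra; auto.
  - pose proof (tay2 a b alpha H _ _ Hab (proj1 Hal) (proj1 HH) D2 Z2' Hol' s Hs) as T.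
    unfold refl, nrefl in T. rewrite Eb in T. replace (a + b - a) with b in T by ring.
    eapply Rle_trans; [exact T|]. repeat apply Rmult_le_compat_r; try lra; auto.
  - pose proof (tay3 a b alpha H _ Hab Hol' s Hs) as T.
    unfold refl, nrefl in T. rewrite Eb in T. replace (a + b - a) with b in T by ring.
    eapply Rle_trans; [exact T|]. repeat apply Rmult_le_compat_r; try lra; auto.
Qed.

Let Acst := 8 * M ^ 2 + Rabs alpha1 * (10 * M ^ 2) + Rabs mu1 * (8 * M ^ m).
Let s0 := Rmin 1 (b - a).

Lemma Acst_nn : 0 <= Acst.
Proof.
  pose proof Mnn. unfold Acst. pose proof (Rabs_pos alpha1); pose proof (Rabs_pos mu1).
  assert (0 <= M ^ 2) by (apply pow_le; auto). assert (0 <= M ^ m) by (apply pow_le; auto).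
  assert (0 <= Rabs alpha1 * (10 * M ^ 2)) by (apply Rmult_le_pos; lra).
  assert (0 <= Rabs mu1 * (8 * M ^ m)) by (apply Rmult_le_pos; lra). lra.
Qed.

Lemma s0_pos : 0 < s0. Proof. unfold s0; apply Rmin_pos; lra. Qed.
Lemma s0_prop s : 0 < s <= s0 -> s <= 1 /\ s <= b - a.
Proof. unfold s0; intros. pose proof (Rmin_l 1 (b - a)); pose proof (Rmin_r 1 (b - a)). lra. Qed.

Lemma ode_a : deriv_on 0 delta (fun t => f3 t a / 6) (fun t => - (6 + 18 * alpha1) * (f3 t a / 6) ^ 2).
Proof.
  apply (ode_deriv delta alpha s0 (6 + 18 * alpha1) M Acst (fun t => f3 t a / 6)
           (fun s t => f t (a + s)) (fun s t => ft t (a + s)) (proj1 Hal) s0_pos Mnn Acst_nn).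
  - intros s Hs. apply (proj1 (HE (a + s) ltac:(pose proof (s0_prop s Hs); lra))).
  - intros s t Hs Ht. apply (tay_a t M Ht (HMb t Ht) s). pose proof (s0_prop s Hs); lra.
  - intros s t Hs Ht. pose proof (s0_prop s Hs) as [Hs1 Hs2].
    destruct (tay_a t M Ht (HMb t Ht) s ltac:(lra)) as [T0 [T1 [T2 T3]]].
    destruct (P_bounds s alpha ltac:(lra) Hal) as [HP1 HP2].
    destruct (C3a_unpack _ _ _ _ _ _ _ _ Hab (proj1 Hal) (HMb t Ht)) as [H [_ [_ HB]]].
    destruct (HB (a + s) ltac:(lra)) as [B0 _]. destruct (HB a ltac:(lra)) as [_ [_ [_ B3]]].
    assert (HR := rhs_exp m alpha1 mu1 M 1 (f3 t a / 6) s (Rpower s alpha)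
       (f t (a + s)) (f1 t (a + s)) (f2 t (a + s)) (f3 t (a + s)) Hm Mnn (or_introl eq_refl) ltac:(lra)
       (conj (exp_pos _) HP2) HP1).
    rewrite ft_eq by lra.
    replace (- (f t (a + s) * f3 t (a + s) + alpha1 * f1 t (a + s) * f2 t (a + s) +
       mu1 / INR m * (INR m * f t (a + s) ^ (m - 1) * f1 t (a + s))) + (6 + 18 * alpha1) * (f3 t a / 6) ^ 2 * s ^ 3)
      with (- (f t (a + s) * f3 t (a + s) + alpha1 * f1 t (a + s) * f2 t (a + s) +
       mu1 / INR m * (INR m * f t (a + s) ^ (m - 1) * f1 t (a + s)) - 1 * (6 + 18 * alpha1) * (f3 t a / 6) ^ 2 * s ^ 3)) by ring.
    rewrite Rabs_Ropp. replace (Acst * s ^ 3 * Rpower s alpha) with (Acst * (s ^ 3 * Rpower s alpha)) by ring. unfold Acst. apply HR.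
    + rewrite Rabs_div by lra. rewrite (Rabs_right 6) by lra. pose proof (Rabs_pos (f3 t a)); pose proof (Rabs_pos (f3 t b)); lra.
    + auto.
    + auto.
    + replace (1 * 3 * (f3 t a / 6) * s ^ 2) with (f3 t a / 2 * s ^ 2) by field. auto.
    + replace (6 * (f3 t a / 6) * s) with (f3 t a * s) by field. auto.
    + replace (1 * 6 * (f3 t a / 6)) with (f3 t a) by field. auto.
  - intros t Ht. destruct (C3a_unpack _ _ _ _ _ _ _ _ Hab (proj1 Hal) (HMb t Ht)) as [H [_ [_ HB]]].
    destruct (HB a ltac:(lra)) as [_ [_ [_ B3]]]. rewrite Rabs_div by lra. rewrite (Rabs_right 6) by lra. pose proof (Rabs_pos (f3 t a)); pose proof (Rabs_pos (f3 t b)); lra.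
Qed.

Lemma ode_b : deriv_on 0 delta (fun t => (- f3 t b) / 6) (fun t => - (- (6 + 18 * alpha1)) * ((- f3 t b) / 6) ^ 2).
Proof.
  apply (ode_deriv delta alpha s0 (- (6 + 18 * alpha1)) M Acst (fun t => (- f3 t b) / 6)
           (fun s t => f t (b - s)) (fun s t => ft t (b - s)) (proj1 Hal) s0_pos Mnn Acst_nn).
  - intros s Hs. apply (proj1 (HE (b - s) ltac:(pose proof (s0_prop s Hs); lra))).
  - intros s t Hs Ht. apply (tay_b t M Ht (HMb t Ht) s). pose proof (s0_prop s Hs); lra.
  - intros s t Hs Ht. pose proof (s0_prop s Hs) as [Hs1 Hs2].
    destruct (tay_b t M Ht (HMb t Ht) s ltac:(lra)) as [T0 [T1 [T2 T3]]].
    destruct (P_bounds s alpha ltac:(lra) Hal) as [HP1 HP2].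
    destruct (C3a_unpack _ _ _ _ _ _ _ _ Hab (proj1 Hal) (HMb t Ht)) as [H [_ [_ HB]]].
    destruct (HB (b - s) ltac:(lra)) as [B0 _]. destruct (HB b ltac:(lra)) as [_ [_ [_ B3]]].
    assert (HR := rhs_exp m alpha1 mu1 M (-1) ((- f3 t b) / 6) s (Rpower s alpha)
       (f t (b - s)) (f1 t (b - s)) (f2 t (b - s)) (f3 t (b - s)) Hm Mnn (or_intror eq_refl) ltac:(lra)
       (conj (exp_pos _) HP2) HP1).
    rewrite ft_eq by lra.
    replace (- (f t (b - s) * f3 t (b - s) + alpha1 * f1 t (b - s) * f2 t (b - s) +
       mu1 / INR m * (INR m * f t (b - s) ^ (m - 1) * f1 t (b - s))) + - (6 + 18 * alpha1) * ((- f3 t b) / 6) ^ 2 * s ^ 3)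
      with (- (f t (b - s) * f3 t (b - s) + alpha1 * f1 t (b - s) * f2 t (b - s) +
       mu1 / INR m * (INR m * f t (b - s) ^ (m - 1) * f1 t (b - s)) - (-1) * (6 + 18 * alpha1) * ((- f3 t b) / 6) ^ 2 * s ^ 3)) by ring.
    rewrite Rabs_Ropp. replace (Acst * s ^ 3 * Rpower s alpha) with (Acst * (s ^ 3 * Rpower s alpha)) by ring. unfold Acst. apply HR.
    + rewrite Rabs_div by lra. rewrite Rabs_Ropp, (Rabs_right 6) by lra. pose proof (Rabs_pos (f3 t b)); lra.
    + auto.
    + auto.
    + replace (f1 t (b - s) - -1 * 3 * (- f3 t b / 6) * s ^ 2) with (- (- f1 t (b - s) - - f3 t b / 2 * s ^ 2)) by field.
      rewrite Rabs_Ropp. auto.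
    + replace (6 * (- f3 t b / 6) * s) with (- f3 t b * s) by field. auto.
    + replace (f3 t (b - s) - -1 * 6 * (- f3 t b / 6)) with (- (- f3 t (b - s) - - f3 t b)) by field.
      rewrite Rabs_Ropp. auto.
  - intros t Ht. destruct (C3a_unpack _ _ _ _ _ _ _ _ Hab (proj1 Hal) (HMb t Ht)) as [H [_ [_ HB]]].
    destruct (HB b ltac:(lra)) as [_ [_ [_ B3]]]. rewrite Rabs_div by lra. rewrite Rabs_Ropp, (Rabs_right 6) by lra. pose proof (Rabs_pos (f3 t b)); lra.
Qed.

Lemma c_a_nonneg t : 0 <= t <= delta -> 0 <= f3 t a / 6.
Proof.
  intros Ht. cut (- (f3 t a / 6) <= 0); [lra|].
  apply (lim_P alpha ((b - a) / 2) _ 0 M (proj1 Hal) ltac:(lra) Mnn).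
  intros s Hs. destruct (tay_a t M Ht (HMb t Ht) s ltac:(lra)) as [T0 _].
  pose proof (P1int (a + s) ltac:(lra) t Ht) as Hp.
  assert (Hs3 : 0 < s ^ 3) by (apply pow_lt; lra).
  assert (H1 : 0 < (f3 t a / 6 + M * Rpower s alpha) * s ^ 3).
  { revert T0; unfold Rabs; destruct Rcase_abs; intros; nra. }
  assert (0 < f3 t a / 6 + M * Rpower s alpha).
  { apply Rmult_lt_reg_r with (s ^ 3); auto. lra. }
  lra.
Qed.

Lemma c_b_nonneg t : 0 <= t <= delta -> 0 <= (- f3 t b) / 6.
Proof.
  intros Ht. cut (- ((- f3 t b) / 6) <= 0); [lra|].
  apply (lim_P alpha ((b - a) / 2) _ 0 M (proj1 Hal) ltac:(lra) Mnn).
  intros s Hs. destruct (tay_b t M Ht (HMb t Ht) s ltac:(lra)) as [T0 _].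
  pose proof (P1int (b - s) ltac:(lra) t Ht) as Hp.
  assert (Hs3 : 0 < s ^ 3) by (apply pow_lt; lra).
  assert (H1 : 0 < ((- f3 t b) / 6 + M * Rpower s alpha) * s ^ 3).
  { revert T0; unfold Rabs; destruct Rcase_abs; intros; nra. }
  assert (0 < (- f3 t b) / 6 + M * Rpower s alpha).
  { apply Rmult_lt_reg_r with (s ^ 3); auto. lra. }
  lra.
Qed.

Lemma Bca t : 0 <= t <= delta -> Rabs (f3 t a / 6) <= M /\ Rabs ((- f3 t b) / 6) <= M.
Proof.
  intros Ht. destruct (C3a_unpack _ _ _ _ _ _ _ _ Hab (proj1 Hal) (HMb t Ht)) as [H [_ [_ HB]]].
  destruct (HB a ltac:(lra)) as [_ [_ [_ B3]]]. destruct (HB b ltac:(lra)) as [_ [_ [_ B3']]].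
  rewrite !Rabs_div, Rabs_Ropp, (Rabs_right 6) by lra.
  pose proof (Rabs_pos (f3 t a)); pose proof (Rabs_pos (f3 t b)). lra.
Qed.

Lemma Rpower_3a s : 0 < s -> Rpower s (3 + alpha) = s ^ 3 * Rpower s alpha.
Proof. intros Hs. rewrite Rpower_plus. f_equal. replace 3 with (INR 3) by (simpl; ring). apply Rpower_pow; auto. Qed.

Lemma sol_summary :
  (forall t, 0 <= t <= delta ->
          f t a = 0 /\ f t b = 0 /\ (forall x, a < x < b -> 0 < f t x)) /\
  (exists beta beta' : R -> R,
          deriv_on 0 delta beta beta' /\
          (forall t, 0 <= t <= delta ->
             beta' t = - (2 + 6 * alpha1) * beta t ^ 4) /\
          6 * beta 0 ^ 3 = f3 0 a /\
          forall M, (forall t, 0 <= t <= delta ->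
                       C3a_norm_le a b alpha (f t) (f1 t) (f2 t) (f3 t) M) ->
          forall t, 0 <= t <= delta ->
          exists eta, 0 < eta /\
            forall x, a < x < a + eta -> x <= b ->
              Rabs (f t x - (beta t * (x - a)) ^ 3)
                <= 1 * M * Rpower (x - a) (3 + alpha)) /\
  (exists beta beta' : R -> R,
          deriv_on 0 delta beta beta' /\
          (forall t, 0 <= t <= delta ->
             beta' t = (2 + 6 * alpha1) * beta t ^ 4) /\
          6 * beta 0 ^ 3 = - f3 0 b /\
          forall M, (forall t, 0 <= t <= delta ->
                       C3a_norm_le a b alpha (f t) (f1 t) (f2 t) (f3 t) M) ->
          forall t, 0 <= t <= delta ->
          exists eta, 0 < eta /\
            forall x, b - eta < x < b -> a <= x ->
              Rabs (f t x - (beta t * (b - x)) ^ 3)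
                <= 1 * M * Rpower (b - x) (3 + alpha)) /\
  (forall t, 0 <= t <= delta -> f1 t a = 0 /\ f2 t a = 0 /\ f1 t b = 0 /\ f2 t b = 0) /\
  deriv_on 0 delta (fun t => f3 t a / 6) (fun t => - (6 + 18 * alpha1) * (f3 t a / 6) ^ 2) /\
  deriv_on 0 delta (fun t => (- f3 t b) / 6) (fun t => - (- (6 + 18 * alpha1)) * ((- f3 t b) / 6) ^ 2) /\
  (forall t, 0 <= t <= delta -> Rabs (f3 t a / 6) <= M /\ Rabs ((- f3 t b) / 6) <= M).
Proof.
  split; [|split; [|split; [|split; [|split; [|split]]]]].
  - intros t Ht. split; [apply P1a; auto| split; [apply P1b; auto|]]. intros x Hx. apply P1int; auto.
  - destruct (beta_exists delta (6 + 18 * alpha1) M (fun t => f3 t a / 6) Hd Mnn ode_a c_a_nonneg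
      (fun t Ht => proj1 (Bca t Ht))) as [be [be' [D [E1 E2]]]].
    exists be, be'. split; auto. split; [intros t Ht; rewrite E1 by auto; field|]. split.
    { rewrite E2 by lra. field. }
    intros M' HM' t Ht. exists (b - a). split; [lra|]. intros x Hx Hxb.
    destruct (tay_a t M' Ht (HM' t Ht) (x - a) ltac:(lra)) as [T0 _].
    replace (a + (x - a)) with x in T0 by ring.
    rewrite Rpower_3a by lra. rewrite Rpow_mult_distr, E2 by auto. lra.
  - destruct (beta_exists delta (- (6 + 18 * alpha1)) M (fun t => (- f3 t b) / 6) Hd Mnn ode_b c_b_nonneg
      (fun t Ht => proj2 (Bca t Ht))) as [be [be' [D [E1 E2]]]].
    exists be, be'. split; auto. split; [intros t Ht; rewrite E1 by auto; field|]. split.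
    { rewrite E2 by lra. field. }
    intros M' HM' t Ht. exists (b - a). split; [lra|]. intros x Hx Hxa.
    destruct (tay_b t M' Ht (HM' t Ht) (b - x) ltac:(lra)) as [T0 _].
    replace (b - (b - x)) with x in T0 by ring.
    rewrite Rpower_3a by lra. rewrite Rpow_mult_distr, E2 by auto. lra.
  - intros t Ht. destruct (van_a t Ht); destruct (van_b t Ht); auto.
  - exact ode_a.
  - exact ode_b.
  - exact Bca.
Qed.
End Main.

Theorem lemma3p1 :
  exists C : R, 0 < C /\
  forall (alpha1 mu1 : R) (m : nat) (a b delta alpha : R),
    (2 <= m)%nat -> a < b -> 0 < delta -> 0 < alpha <= 1 ->
    (forall f f1 f2 f3 ft : R -> R -> R,
       Sol alpha1 mu1 m a b delta alpha f f1 f2 f3 ft ->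
       (forall t, 0 <= t <= delta ->
          f t a = 0 /\ f t b = 0 /\ (forall x, a < x < b -> 0 < f t x)) /\
       (exists beta beta' : R -> R,
          deriv_on 0 delta beta beta' /\
          (forall t, 0 <= t <= delta ->
             beta' t = - (2 + 6 * alpha1) * beta t ^ 4) /\
          6 * beta 0 ^ 3 = f3 0 a /\
          forall M, (forall t, 0 <= t <= delta ->
                       C3a_norm_le a b alpha (f t) (f1 t) (f2 t) (f3 t) M) ->
          forall t, 0 <= t <= delta ->
          exists eta, 0 < eta /\
            forall x, a < x < a + eta -> x <= b ->
              Rabs (f t x - (beta t * (x - a)) ^ 3)
                <= C * M * Rpower (x - a) (3 + alpha)) /\
       (exists beta beta' : R -> R,
          deriv_on 0 delta beta beta' /\
          (forall t, 0 <= t <= delta ->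
             beta' t = (2 + 6 * alpha1) * beta t ^ 4) /\
          6 * beta 0 ^ 3 = - f3 0 b /\
          forall M, (forall t, 0 <= t <= delta ->
                       C3a_norm_le a b alpha (f t) (f1 t) (f2 t) (f3 t) M) ->
          forall t, 0 <= t <= delta ->
          exists eta, 0 < eta /\
            forall x, b - eta < x < b -> a <= x ->
              Rabs (f t x - (beta t * (b - x)) ^ 3)
                <= C * M * Rpower (b - x) (3 + alpha))) /\
    (forall f f1 f2 f3 ft g g1 g2 g3 gt : R -> R -> R,
       Sol alpha1 mu1 m a b delta alpha f f1 f2 f3 ft ->
       Sol alpha1 mu1 m a b delta alpha g g1 g2 g3 gt ->
       (f 0 a = g 0 a /\ f1 0 a = g1 0 a /\ f2 0 a = g2 0 a /\ f3 0 a = g3 0 a ->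
        forall t, 0 <= t <= delta ->
          f t a = g t a /\ f1 t a = g1 t a /\ f2 t a = g2 t a /\ f3 t a = g3 t a) /\
       (f 0 b = g 0 b /\ f1 0 b = g1 0 b /\ f2 0 b = g2 0 b /\ f3 0 b = g3 0 b ->
        forall t, 0 <= t <= delta ->
          f t b = g t b /\ f1 t b = g1 t b /\ f2 t b = g2 t b /\ f3 t b = g3 t b)).
Proof.
  exists 1. split; [lra|]. intros alpha1 mu1 m a b delta alpha Hm Hab Hd Hal. split.
  - intros f f1 f2 f3 ft HS.
    destruct HS as [[HX [[M HM] [K HK]]] [HE [Hp [Z0a [_ [_ [Z0b _]]]]]]].
    destruct (sol_summary alpha1 mu1 m a b delta alpha Hm Hab Hd Hal f f1 f2 f3 ft M K HX HM HK HE Hp Z0a Z0b)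
      as [P1 [Ea [Eb _]]].
    split; [exact P1| split; [exact Ea| exact Eb]].
  - intros f f1 f2 f3 ft g g1 g2 g3 gt HSf HSg.
    destruct HSf as [[HXf [[Mf HMf] [Kf HKf]]] [HEf [Hpf [Z0af [_ [_ [Z0bf _]]]]]]].
    destruct HSg as [[HXg [[Mg HMg] [Kg HKg]]] [HEg [Hpg [Z0ag [_ [_ [Z0bg _]]]]]]].
    destruct (sol_summary alpha1 mu1 m a b delta alpha Hm Hab Hd Hal f f1 f2 f3 ft Mf Kf HXf HMf HKf HEf Hpf Z0af Z0bf)
      as [P1f [_ [_ [Vf [Daf [Dbf Bf]]]]]].
    destruct (sol_summary alpha1 mu1 m a b delta alpha Hm Hab Hd Hal g g1 g2 g3 gt Mg Kg HXg HMg HKg HEg Hpg Z0ag Z0bg)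
      as [P1g [_ [_ [Vg [Dag [Dbg Bg]]]]]].
    set (B := Rmax Mf Mg).
    assert (HB1 : Mf <= B) by apply Rmax_l. assert (HB2 : Mg <= B) by apply Rmax_r.
    assert (HB0 : 0 <= B).
    { destruct (Bf 0 ltac:(lra)) as [H _]. pose proof (Rabs_pos (f3 0 a / 6)). lra. }
    split.
    + intros [E0 [E1 [E2 E3]]] t Ht.
      destruct (P1f t Ht) as [fa _]. destruct (P1g t Ht) as [ga _].
      destruct (Vf t Ht) as [f1a [f2a _]]. destruct (Vg t Ht) as [g1a [g2a _]].
      assert (U := uniq_ode delta (6 + 18 * alpha1) B (fun t => f3 t a / 6) (fun t => g3 t a / 6) Hd HB0 Daf Dag).
      assert (U' : f3 t a / 6 = g3 t a / 6).
      { apply U; auto.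
        - intros u Hu. pose proof (proj1 (Bf u Hu)). lra.
        - intros u Hu. pose proof (proj1 (Bg u Hu)). lra.
        - rewrite E3. auto. }
      split; [lra| split; [lra| split; lra]].
    + intros [E0 [E1 [E2 E3]]] t Ht.
      destruct (P1f t Ht) as [_ [fb _]]. destruct (P1g t Ht) as [_ [gb _]].
      destruct (Vf t Ht) as [_ [_ [f1b f2b]]]. destruct (Vg t Ht) as [_ [_ [g1b g2b]]].
      assert (U := uniq_ode delta (- (6 + 18 * alpha1)) B (fun t => (- f3 t b) / 6) (fun t => (- g3 t b) / 6) Hd HB0 Dbf Dbg).
      assert (U' : (- f3 t b) / 6 = (- g3 t b) / 6).
      { apply U; auto.
        - intros u Hu. pose proof (proj2 (Bf u Hu)). lra.
        - intros u Hu. pose proof (proj2 (Bg u Hu)). lra.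
        - rewrite E3. auto. }
      split; [lra| split; [lra| split; lra]].
Qed.
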